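(* Let $\mathcal K$ be a 2-category and $\{\lambda_{i,j}:s_js_i\to s_is_j\}_{0\le i<j\le 2}$ a 0-cell of $\mathsf{Wdl}^{(2)}(\overline{\mathcal K})$. Define the 2-cells $\overrightarrow\lambda_{0,p,q}:=\mu_0s_ps_q.s_0\lambda_{0,p}s_q.s_0s_p\lambda_{0,q}.s_0s_ps_q\eta_0:s_0s_ps_q\to s_0s_ps_q$ for $(p,q)\in\{(1,2),(2,1)\}$, and $\overleftarrow\lambda_{k,l,2}:=s_ks_l\mu_2.s_k\lambda_{l,2}s_2.\lambda_{k,2}s_ls_2.\eta_2s_ks_ls_2:s_ks_ls_2\to s_ks_ls_2$ for $(k,l)\in\{(0,1),(1,0)\}$. These are idempotent 2-cells in $\mathcal K$ and satisfy: (1) $\overrightarrow\lambda_{0,p,q}.\bar\lambda_{0p}s_q=\overrightarrow\lambda_{0,p,q}=\bar\lambda_{0p}s_q.\overrightarrow\lambda_{0,p,q}$; (2) $\overrightarrow\lambda_{0,1,2}.s_0\lambda_{1,2}=s_0\lambda_{1,2}.\overrightarrow\lambda_{0,2,1}$; (3) $\overrightarrow\lambda_{0,p,q}.\lambda_{0,p}s_q=\lambda_{0,p}s_q.s_p\bar\lambda_{0q}$; (4) $\overleftarrow\lambda_{k,l,2}.s_k\bar\lambda_{l2}=\overleftarrow\lambda_{k,l,2}=s_k\bar\lambda_{l2}.\overleftarrow\lambda_{k,l,2}$; (5) $\overleftarrow\lambda_{0,1,2}.\lambda_{0,1}s_2=\lambda_{0,1}s_2.\overleftarrow\lambda_{1,0,2}$;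 (6) $\overleftarrow\lambda_{k,l,2}.s_k\lambda_{l,2}=s_k\lambda_{l,2}.\bar\lambda_{k2}s_l$; (7) $\overleftarrow\lambda_{0,1,2}.\overrightarrow\lambda_{0,1,2}=\overleftarrow\lambda_{0,1,2}.\bar\lambda_{01}s_2=\overrightarrow\lambda_{0,1,2}.s_0\bar\lambda_{12}=\overrightarrow\lambda_{0,1,2}.\overleftarrow\lambda_{0,1,2}$.
   Context: Conventions. For 1-cells, $uw$ is the horizontal composite ($w$ first); for 2-cells $\alpha,\beta$, $\alpha\beta$ is their horizontal composite; a 1-cell next to a 2-cell means whiskering by its identity 2-cell; $\alpha.\beta$ is vertical composition ($\beta$ first). A monad $(A,t)$ has multiplication $\mu:tt\to t$ and unit $\eta:1_A\to t$; indices carry over ($s_i$ has $\mu_i,\eta_i$). Local idempotent closure $\overline{\mathcal K}$: same 0-cells as $\mathcal K$; 1-cells are pairs $(v,\bar v)$ with $v$ a 1-cell of $\mathcal K$ and $\bar v:v\to v$ an idempotent 2-cell; 2-cells $(v,\bar v)\to(v',\bar v')$ are 2-cells $\omega:v\to v'$ of $\mathcal K$ with $\bar v'.\omega=\omega=\omega.\bar v$; compositions induced from $\mathcal K$, identity 2-cell of $(v,\bar v)$ is $\bar v$. A monad $(A,(t,\bar t))$ in $\overline{\mathcal K}$ satisfies in particular $\mu.t\eta=\mu.\eta t=\bar t$; we write just $t$. A weak distributive law in $\overline{\mathcal K}$: monads $(A,t),(A,s)$ in $\overline{\mathcal K}$ and a 2-cell $\lambda:ts\to st$ of $\overline{\mathcal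 K}$ with $\lambda.\mu s=s\mu.\lambda t.t\lambda$, $\lambda.t\mu=\mu t.s\lambda.\lambda s$, $\lambda.\eta s=\mu t.s\lambda.st\eta.s\eta$, $\lambda.t\eta=s\mu.\lambda t.\eta st.\eta t$; its idempotent is $\bar\lambda:=\mu t.s\lambda.st\eta=s\mu.\lambda t.\eta st$. A 0-cell of $\mathsf{Wdl}^{(2)}(\overline{\mathcal K})$ consists of monads $(A,s_0),(A,s_1),(A,s_2)$ in $\overline{\mathcal K}$ and weak distributive laws $\lambda_{i,j}:s_js_i\to s_is_j$ in $\overline{\mathcal K}$ ($0\le i<j\le2$) satisfying the Yang–Baxter relation $\lambda_{0,1}s_2.s_1\lambda_{0,2}.\lambda_{1,2}s_0=s_0\lambda_{1,2}.\lambda_{0,2}s_1.s_2\lambda_{0,1}$. $\bar\lambda_{ij}$ denotes the idempotent of $\lambda_{i,j}$. *)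

(* Defs.v *)
(* A strict 2-category presented
   algebraically: sets of 0-, 1- and 2-cells with source/target maps and
   total composition operations whose laws are imposed on composable data. *)

Record TwoCat : Type := {
  ob : Type; c1 : Type; c2 : Type;
  dom1 : c1 -> ob; cod1 : c1 -> ob;
  src2 : c2 -> c1; tgt2 : c2 -> c1;
  id1 : ob -> c1; id2 : c1 -> c2;
  comp1 : c1 -> c1 -> c1;   (* comp1 u w = uw, w first *)
  vcomp : c2 -> c2 -> c2;   (* vcomp a b = a.b, b first *)
  hcomp : c2 -> c2 -> c2;   (* hcomp a b = ab, b first *)
  dom1_id1 : forall a, dom1 (id1 a) = a;
  cod1_id1 : forall a, cod1 (id1 a) = a;
  dom1_comp1 : forall g f, cod1 f = dom1 g -> dom1 (comp1 g f) = dom1 f;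
  cod1_comp1 : forall g f, cod1 f = dom1 g -> cod1 (comp1 g f) = cod1 g;
  comp1A : forall h g f, cod1 f = dom1 g -> cod1 g = dom1 h ->
    comp1 h (comp1 g f) = comp1 (comp1 h g) f;
  comp1_id1r : forall f, comp1 f (id1 (dom1 f)) = f;
  comp1_id1l : forall f, comp1 (id1 (cod1 f)) f = f;
  dom1_src2_tgt2 : forall a, dom1 (src2 a) = dom1 (tgt2 a);
  cod1_src2_tgt2 : forall a, cod1 (src2 a) = cod1 (tgt2 a);
  src2_id2 : forall f, src2 (id2 f) = f;
  tgt2_id2 : forall f, tgt2 (id2 f) = f;
  src2_vcomp : forall a b, src2 a = tgt2 b -> src2 (vcomp a b) = src2 b;
  tgt2_vcomp : forall a b, src2 a = tgt2 b -> tgt2 (vcomp a b) = tgt2 a;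
  vcompA : forall a b c, src2 a = tgt2 b -> src2 b = tgt2 c ->
    vcomp a (vcomp b c) = vcomp (vcomp a b) c;
  vcomp_id2r : forall a, vcomp a (id2 (src2 a)) = a;
  vcomp_id2l : forall a, vcomp (id2 (tgt2 a)) a = a;
  src2_hcomp : forall a b, cod1 (src2 b) = dom1 (src2 a) ->
    src2 (hcomp a b) = comp1 (src2 a) (src2 b);
  tgt2_hcomp : forall a b, cod1 (src2 b) = dom1 (src2 a) ->
    tgt2 (hcomp a b) = comp1 (tgt2 a) (tgt2 b);
  hcompA : forall a b c, cod1 (src2 c) = dom1 (src2 b) ->
    cod1 (src2 b) = dom1 (src2 a) ->
    hcomp a (hcomp b c) = hcomp (hcomp a b) c;
  hcomp_id2r : forall a, hcomp a (id2 (id1 (dom1 (src2 a)))) = a;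
  hcomp_id2l : forall a, hcomp (id2 (id1 (cod1 (src2 a)))) a = a;
  hcomp_id2 : forall g f, cod1 f = dom1 g ->
    hcomp (id2 g) (id2 f) = id2 (comp1 g f);
  interchange : forall a a' b b', src2 a' = tgt2 a -> src2 b' = tgt2 b ->
    cod1 (src2 b) = dom1 (src2 a) ->
    hcomp (vcomp a' a) (vcomp b' b) = vcomp (hcomp a' b') (hcomp a b)
}.

Arguments dom1 {t} _. Arguments cod1 {t} _.
Arguments src2 {t} _. Arguments tgt2 {t} _.
Arguments id1 {t} _. Arguments id2 {t} _.
Arguments comp1 {t} _ _. Arguments vcomp {t} _ _. Arguments hcomp {t} _ _.

Section Defs.
Variable K : TwoCat.

Definition wl (f : c1 K) (a : c2 K) : c2 K := hcomp (id2 f) a.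
Definition wr (a : c2 K) (f : c1 K) : c2 K := hcomp a (id2 f).

Definition idem2 (f : c1 K) (x : c2 K) : Prop :=
  src2 x = f /\ tgt2 x = f /\ vcomp x x = x.

(* A monad (A,(t,tb)) in the local idempotent closure Kbar, unfolded into K.
   In Kbar, whiskering by the 1-cell (t,tb) means horizontal composition with
   its identity 2-cell tb, and the identity 1-cell of A is (1_A, id_{1_A}). *)
Record bar_monad (A : ob K) : Type := {
  bm_t : c1 K; bm_tb : c2 K; bm_mu : c2 K; bm_eta : c2 K;
  bm_dom : dom1 bm_t = A;
  bm_cod : cod1 bm_t = A;
  bm_tb_src : src2 bm_tb = bm_t;
  bm_tb_tgt : tgt2 bm_tb = bm_t;
  bm_tb_idem : vcomp bm_tb bm_tb = bm_tb;
  bm_mu_src : src2 bm_mu = comp1 bm_t bm_t;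
  bm_mu_tgt : tgt2 bm_mu = bm_t;
  bm_mu_l : vcomp bm_tb bm_mu = bm_mu;
  bm_mu_r : vcomp bm_mu (hcomp bm_tb bm_tb) = bm_mu;
  bm_eta_src : src2 bm_eta = id1 A;
  bm_eta_tgt : tgt2 bm_eta = bm_t;
  bm_eta_l : vcomp bm_tb bm_eta = bm_eta;
  bm_eta_r : vcomp bm_eta (id2 (id1 A)) = bm_eta;
  bm_assoc : vcomp bm_mu (hcomp bm_mu bm_tb) = vcomp bm_mu (hcomp bm_tb bm_mu);
  bm_unit_l : vcomp bm_mu (hcomp bm_tb bm_eta) = bm_tb;
  bm_unit_r : vcomp bm_mu (hcomp bm_eta bm_tb) = bm_tb
}.

Arguments bm_t {A} _. Arguments bm_tb {A} _.
Arguments bm_mu {A} _. Arguments bm_eta {A} _.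

Definition is_wdl {A} (T S : bar_monad A) (lam : c2 K) : Prop :=
  let t := bm_t T in let tb := bm_tb T in let mut := bm_mu T in let etat := bm_eta T in
  let s := bm_t S in let sb := bm_tb S in let mus := bm_mu S in let etas := bm_eta S in
  src2 lam = comp1 t s /\ tgt2 lam = comp1 s t /\
      vcomp (hcomp sb tb) lam = lam /\ vcomp lam (hcomp tb sb) = lam /\
      vcomp lam (hcomp mut sb)
        = vcomp (hcomp sb mut) (vcomp (hcomp lam tb) (hcomp tb lam)) /\
      vcomp lam (hcomp tb mus)
        = vcomp (hcomp mus tb) (vcomp (hcomp sb lam) (hcomp lam sb)) /\
      vcomp lam (hcomp etat sb)
        = vcomp (hcomp mus tb) (vcomp (hcomp sb lam)
            (vcomp (hcomp (hcomp sb tb) etas) (hcomp sb etat))) /\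
      vcomp lam (hcomp tb etas)
        = vcomp (hcomp sb mut) (vcomp (hcomp lam tb)
            (vcomp (hcomp etat (hcomp sb tb)) (hcomp etas tb))).

Definition lam_bar {A} (T S : bar_monad A) (lam : c2 K) : c2 K :=
  vcomp (hcomp (bm_mu S) (bm_tb T))
    (vcomp (hcomp (bm_tb S) lam) (hcomp (hcomp (bm_tb S) (bm_tb T)) (bm_eta S))).

Definition yang_baxter {A} (S0 S1 S2 : bar_monad A) (l01 l02 l12 : c2 K) : Prop :=
  vcomp (hcomp l01 (bm_tb S2)) (vcomp (hcomp (bm_tb S1) l02) (hcomp l12 (bm_tb S0)))
  = vcomp (hcomp (bm_tb S0) l12) (vcomp (hcomp l02 (bm_tb S1)) (hcomp (bm_tb S2) l01)).

Definition wdl2_cell {A} (S0 S1 S2 : bar_monad A) (l01 l02 l12 : c2 K) : Prop :=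
  is_wdl S1 S0 l01 /\ is_wdl S2 S0 l02 /\ is_wdl S2 S1 l12 /\
      yang_baxter S0 S1 S2 l01 l02 l12.

Definition lam_right {A} (S0 Sp Sq : bar_monad A) (l0p l0q : c2 K) : c2 K :=
  let s0 := bm_t S0 in let sp := bm_t Sp in let sq := bm_t Sq in
  vcomp (wr (bm_mu S0) (comp1 sp sq))
   (vcomp (wl s0 (wr l0p sq))
    (vcomp (wl s0 (wl sp l0q))
           (wl (comp1 s0 (comp1 sp sq)) (bm_eta S0)))).

Definition lam_left {A} (Sk Sl S2 : bar_monad A) (lk2 ll2 : c2 K) : c2 K :=
  let sk := bm_t Sk in let sl := bm_t Sl in let s2 := bm_t S2 in
  vcomp (wl (comp1 sk sl) (bm_mu S2))
   (vcomp (wl sk (wr ll2 s2))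
    (vcomp (wr lk2 (comp1 sl s2))
           (wr (bm_eta S2) (comp1 sk (comp1 sl s2))))).

End Defs.

Arguments wl {K} _ _. Arguments wr {K} _ _. Arguments idem2 {K} _ _.
Arguments bm_t {K A} _. Arguments bm_tb {K A} _.
Arguments bm_mu {K A} _. Arguments bm_eta {K A} _.
Arguments is_wdl {K A} _ _ _. Arguments lam_bar {K A} _ _ _.
Arguments yang_baxter {K A} _ _ _ _ _ _. Arguments wdl2_cell {K A} _ _ _ _ _ _.
Arguments lam_right {K A} _ _ _ _ _. Arguments lam_left {K A} _ _ _ _ _.

(* Main.v *)
Require Import Defs.
From Stdlib Require Import List.
Import ListNotations.

Section Infra.
Variable K : TwoCat.
Variable A : ob K.
Variables S0 S1 S2 : bar_monad K A.

Definition Sm (i : nat) : bar_monad K A :=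
  match i with 0 => S0 | 1 => S1 | _ => S2 end.
Definition s i := bm_t (Sm i).
Definition tb i := bm_tb (Sm i).
Definition mu i := bm_mu (Sm i).
Definition eta i := bm_eta (Sm i).

Fixpoint c1w (w : list nat) : c1 K :=
  match w with [] => id1 A | i :: w' =>
    match w' with [] => s i | _ => comp1 (s i) (c1w w') end end.
Fixpoint idw (w : list nat) : c2 K :=
  match w with [] => id2 (id1 A) | i :: w' =>
    match w' with [] => tb i | _ => hcomp (tb i) (idw w') end end.

Lemma s_dom i : dom1 (s i) = A. Proof. apply bm_dom. Qed.
Lemma s_cod i : cod1 (s i) = A. Proof. apply bm_cod. Qed.

Lemma c1w_endo w : dom1 (c1w w) = A /\ cod1 (c1w w) = A.
Proof.
  induction w as [|i w IH]; simpl.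
  - split; [apply dom1_id1|apply cod1_id1].
  - destruct w as [|j w']; [split; [apply s_dom|apply s_cod]|].
    destruct IH as [IH1 IH2].
    split; [rewrite dom1_comp1|rewrite cod1_comp1]; auto using s_dom, s_cod;
      rewrite IH2, s_dom; reflexivity.
Qed.
Lemma c1w_dom w : dom1 (c1w w) = A. Proof. apply c1w_endo. Qed.
Lemma c1w_cod w : cod1 (c1w w) = A. Proof. apply c1w_endo. Qed.

Lemma c1w_cons i w : c1w (i :: w) = comp1 (s i) (c1w w).
Proof.
  destruct w as [|j w]; [|reflexivity]. simpl.
  assert (H := comp1_id1r _ (s i)); rewrite s_dom in H; symmetry; exact H.
Qed.

Lemma c1w_app u v : comp1 (c1w u) (c1w v) = c1w (u ++ v).
Proof.
  induction u as [|i u IH].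
  - simpl. assert (H := comp1_id1l _ (c1w v)); rewrite c1w_cod in H; exact H.
  - rewrite (c1w_cons i u), <- app_comm_cons, (c1w_cons i (u ++ v)).
    rewrite <- comp1A, IH; [reflexivity| |];
      rewrite ?c1w_cod, ?c1w_dom, ?s_dom; reflexivity.
Qed.

Lemma tb_src i : src2 (tb i) = s i. Proof. apply bm_tb_src. Qed.
Lemma tb_tgt i : tgt2 (tb i) = s i. Proof. apply bm_tb_tgt. Qed.
Lemma tb_idem i : vcomp (tb i) (tb i) = tb i. Proof. apply bm_tb_idem. Qed.

Lemma idw_cons i w : idw (i :: w) = hcomp (tb i) (idw w).
Proof.
  destruct w as [|j w]; [|reflexivity]. simpl.
  replace (id1 A) with (id1 (dom1 (src2 (tb i)))) by (rewrite tb_src, s_dom; reflexivity).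
  symmetry; apply hcomp_id2r.
Qed.

Lemma idw_st w : src2 (idw w) = c1w w /\ tgt2 (idw w) = c1w w.
Proof.
  induction w as [|i w IH].
  - simpl; rewrite src2_id2, tgt2_id2; auto.
  - rewrite idw_cons, c1w_cons. destruct IH as [IH1 IH2].
    rewrite src2_hcomp, tgt2_hcomp; rewrite ?IH1, ?IH2, ?tb_src, ?tb_tgt;
      auto; rewrite c1w_cod, s_dom; reflexivity.
Qed.
Lemma idw_src w : src2 (idw w) = c1w w. Proof. apply idw_st. Qed.
Lemma idw_tgt w : tgt2 (idw w) = c1w w. Proof. apply idw_st. Qed.

Lemma idw_idem w : vcomp (idw w) (idw w) = idw w.
Proof.
  induction w as [|i w IH].
  - simpl. assert (H := vcomp_id2r _ (id2 (id1 A))); rewrite src2_id2 in H; exact H.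
  - rewrite idw_cons, <- interchange, IH, tb_idem; [reflexivity| | |];
    rewrite ?idw_src, ?idw_tgt, ?tb_src, ?tb_tgt, ?c1w_cod, ?s_dom; reflexivity.
Qed.

Lemma idw_app u v : hcomp (idw u) (idw v) = idw (u ++ v).
Proof.
  induction u as [|i u IH].
  - simpl. replace (id1 A) with (id1 (cod1 (src2 (idw v)))) by (rewrite idw_src, c1w_cod; reflexivity).
    apply hcomp_id2l.
  - rewrite (idw_cons i u), <- app_comm_cons, (idw_cons i (u ++ v)).
    rewrite <- hcompA, IH; [reflexivity| |];
      rewrite ?idw_src, ?tb_src, ?c1w_cod, ?c1w_dom, ?s_dom; reflexivity.
Qed.

Record Io := mkIo { io : list nat -> c2 K;
  io_src : forall w, src2 (io w) = c1w w;
  io_tgt : forall w, tgt2 (io w) = c1w w;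
  io_idem : forall w, vcomp (io w) (io w) = io w;
  io_app : forall u v, hcomp (io u) (io v) = io (u ++ v);
  io_nil : io [] = id2 (id1 A) }.

Definition Ib : Io := mkIo idw idw_src idw_tgt idw_idem idw_app eq_refl.

Lemma id2c_app u v : hcomp (id2 (c1w u)) (id2 (c1w v)) = id2 (c1w (u ++ v)).
Proof. rewrite hcomp_id2, c1w_app; auto. rewrite c1w_cod, c1w_dom; auto. Qed.
Lemma id2c_idem w : vcomp (id2 (c1w w)) (id2 (c1w w)) = id2 (c1w w).
Proof. assert (H := vcomp_id2r _ (id2 (c1w w))). rewrite src2_id2 in H. exact H. Qed.

Definition Ik : Io := mkIo (fun w => id2 (c1w w)) (fun w => src2_id2 _ (c1w w))
  (fun w => tgt2_id2 _ (c1w w)) id2c_idem id2c_app eq_refl.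

Definition tyg (I : Io) (x : c2 K) (u v : list nat) : Prop :=
  src2 x = c1w u /\ tgt2 x = c1w v /\ vcomp (io I v) x = x /\ vcomp x (io I u) = x.

Lemma ty_src I x u v : tyg I x u v -> src2 x = c1w u. Proof. intros H; apply H. Qed.
Lemma ty_tgt I x u v : tyg I x u v -> tgt2 x = c1w v. Proof. intros H; apply H. Qed.

Lemma ty_io I w : tyg I (io I w) w w.
Proof. repeat split; rewrite ?io_src, ?io_tgt, ?io_idem; auto. Qed.

Lemma ty_v I a b u v w : tyg I a v w -> tyg I b u v -> tyg I (vcomp a b) u w.
Proof.
  intros [Ha1 [Ha2 [Ha3 Ha4]]] [Hb1 [Hb2 [Hb3 Hb4]]].
  assert (E : src2 a = tgt2 b) by congruence.
  repeat split.
  - rewrite src2_vcomp; auto.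
  - rewrite tgt2_vcomp; auto.
  - rewrite vcompA, Ha3; auto. rewrite io_src; auto.
  - rewrite <- vcompA, Hb4; auto. rewrite io_tgt; auto.
Qed.

Lemma ty_h I a b u u' v v' : tyg I a u u' -> tyg I b v v' -> tyg I (hcomp a b) (u ++ v) (u' ++ v').
Proof.
  intros [Ha1 [Ha2 [Ha3 Ha4]]] [Hb1 [Hb2 [Hb3 Hb4]]].
  assert (E : cod1 (src2 b) = dom1 (src2 a)) by (rewrite Hb1, Ha1, c1w_cod, c1w_dom; auto).
  repeat split.
  - rewrite src2_hcomp, Ha1, Hb1, c1w_app; auto.
  - rewrite tgt2_hcomp, Ha2, Hb2, c1w_app; auto.
  - rewrite <- io_app, <- interchange, Ha3, Hb3; auto;
    rewrite ?io_src, ?io_tgt, ?Ha1, ?Ha2, ?Hb1, ?Hb2, ?c1w_cod, ?c1w_dom; auto.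
  - rewrite <- io_app, <- interchange, Ha4, Hb4; auto;
    rewrite ?io_src, ?io_tgt, ?Ha1, ?Ha2, ?Hb1, ?Hb2, ?c1w_cod, ?c1w_dom; auto.
Qed.

Lemma ty_v' I a b u v v' w U W : tyg I a v' w -> tyg I b u v -> v = v' -> U = u -> W = w -> tyg I (vcomp a b) U W.
Proof. intros; subst; eapply ty_v; eauto. Qed.
Lemma ty_h' I a b u u' v v' U V : tyg I a u u' -> tyg I b v v' -> U = u ++ v -> V = u' ++ v' -> tyg I (hcomp a b) U V.
Proof. intros; subst; eapply ty_h; eauto. Qed.
Lemma ty_io' I w U V : U = w -> V = w -> tyg I (io I w) U V.
Proof. intros; subst; apply ty_io. Qed.

Notation ty := (tyg Ib).
Notation tyk := (tyg Ik).

Lemma ty_b2k x u v : ty x u v -> tyk x u v.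
Proof.
  intros [H1 [H2 _]]. repeat split; auto; simpl.
  - rewrite <- H2. apply vcomp_id2l.
  - rewrite <- H1. apply vcomp_id2r.
Qed.

Lemma ty_tb i : ty (tb i) [i] [i]. Proof. apply (ty_io Ib [i]). Qed.
Lemma ty_mu i : ty (mu i) [i; i] [i].
Proof.
  unfold tyg, mu; simpl. repeat split.
  apply bm_mu_src. apply bm_mu_tgt. apply bm_mu_l. apply bm_mu_r.
Qed.
Lemma ty_eta i : ty (eta i) [] [i].
Proof.
  unfold tyg, eta; simpl. repeat split.
  apply bm_eta_src. apply bm_eta_tgt. apply bm_eta_l. apply bm_eta_r.
Qed.

Definition layg (I : Io) (u : list nat) (x : c2 K) (v : list nat) : c2 K :=
  hcomp (io I u) (hcomp x (io I v)).
Notation lay := (layg Ib).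
Notation layk := (layg Ik).

Lemma ty_lay I u x v m n : tyg I x m n -> tyg I (layg I u x v) (u ++ m ++ v) (u ++ n ++ v).
Proof. intros Hx. unfold layg. apply ty_h; [apply ty_io|]. apply ty_h; auto; apply ty_io. Qed.
Lemma ty_lay' I u x v m n U V : tyg I x m n -> U = u ++ m ++ v -> V = u ++ n ++ v -> tyg I (layg I u x v) U V.
Proof. intros; subst; apply ty_lay; auto. Qed.

Lemma ty_conv I x u v U V : tyg I x u v -> U = u -> V = v -> tyg I x U V.
Proof. intros; subst; auto. Qed.

Lemma sc_st I I' a b u v v' w : tyg I a v w -> tyg I' b u v' -> v' = v -> src2 a = tgt2 b.
Proof. intros Ha Hb E; subst; rewrite (ty_src _ _ _ _ Ha), (ty_tgt _ _ _ _ Hb); auto. Qed.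
Lemma sc_cd I I' a b u v u' v' : tyg I a u v -> tyg I' b u' v' -> cod1 (src2 b) = dom1 (src2 a).
Proof. intros Ha Hb; rewrite (ty_src _ _ _ _ Ha), (ty_src _ _ _ _ Hb), c1w_cod, c1w_dom; auto. Qed.

Lemma lay_nil I x m n : tyg I x m n -> layg I [] x [] = x.
Proof.
  intros Hx. unfold layg. rewrite io_nil.
  replace (id1 A) with (id1 (dom1 (src2 x))) by (rewrite (ty_src _ _ _ _ Hx), c1w_dom; auto).
  rewrite hcomp_id2r.
  replace (id1 (dom1 (src2 x))) with (id1 (cod1 (src2 x))) by (rewrite (ty_src _ _ _ _ Hx), c1w_dom, c1w_cod; auto).
  apply hcomp_id2l.
Qed.

Ltac leq := first [reflexivity | match goal with |- ?a = ?b =>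
  tryif has_evar a then fail else tryif has_evar b then fail else
  (simpl; rewrite ?app_nil_r, <- ?app_assoc; simpl; reflexivity) end].

Ltac tyatom := first [ eapply ty_conv; [eassumption | leq | leq]
  | eapply ty_conv; [apply ty_mu | leq | leq]
  | eapply ty_conv; [apply ty_eta | leq | leq]
  | eapply ty_conv; [apply ty_tb | leq | leq]
  | eapply ty_conv; [apply ty_b2k; eassumption | leq | leq]
  | eapply ty_conv; [apply ty_b2k; apply ty_mu | leq | leq]
  | eapply ty_conv; [apply ty_b2k; apply ty_eta | leq | leq]
  | eapply ty_conv; [apply ty_b2k; apply ty_tb | leq | leq] ].

Ltac tybody go := first [ lazymatch goal with
  | |- tyg _ (vcomp _ _) _ _ => eapply ty_v'; [go | go | leq | leq | leq]
  | |- tyg _ (hcomp _ _) _ _ => eapply ty_h'; [go | go | leq | leq]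
  | |- tyg _ (layg _ _ _ _) _ _ => eapply ty_lay'; [go | leq | leq]
  | |- tyg _ (io _ _) _ _ => first [eapply ty_io'; [leq | leq]
     | eapply ty_conv; [apply ty_b2k; apply ty_io | leq | leq]]
  | |- _ => tyatom
  end
  | lazymatch goal with |- tyg Ik _ _ _ => apply ty_b2k end; go ].

Ltac tyi := let rec go :=
  first [ (match goal with |- tyg ?I _ _ _ => is_evar I; unify I Ik end; tybody go) | tybody go ] in go.

Lemma ich I1 I2 I3 I4 a a' b b' m n p k l q : tyg I1 a m n -> tyg I2 a' n p -> tyg I3 b k l -> tyg I4 b' l q ->
  vcomp (hcomp a' b') (hcomp a b) = hcomp (vcomp a' a) (vcomp b' b).
Proof. intros. rewrite interchange; auto; [eapply sc_st|eapply sc_st|eapply sc_cd]; eauto. Qed.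

Lemma hA I1 I2 I3 a b c m n k l p q : tyg I1 a m n -> tyg I2 b k l -> tyg I3 c p q ->
  hcomp a (hcomp b c) = hcomp (hcomp a b) c.
Proof. intros. rewrite hcompA; auto; eapply sc_cd; eauto. Qed.

Lemma vA I1 I2 I3 a b c m n k l : tyg I1 a k l -> tyg I2 b n k -> tyg I3 c m n ->
  vcomp a (vcomp b c) = vcomp (vcomp a b) c.
Proof. intros. rewrite vcompA; auto; eapply sc_st; eauto. Qed.

Lemma absl I x u v w : tyg I x u v -> w = v -> vcomp (io I w) x = x.
Proof. intros H E; subst; apply H. Qed.
Lemma absr I x u v w : tyg I x u v -> w = u -> vcomp x (io I w) = x.
Proof. intros H E; subst; apply H. Qed.

Lemma lay_v I u v x y m n k : tyg I x m n -> tyg I y k m ->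
  vcomp (layg I u x v) (layg I u y v) = layg I u (vcomp x y) v.
Proof.
  intros. unfold layg.
  erewrite (ich I I I I (io I u) (io I u) (hcomp y (io I v)) (hcomp x (io I v))) by tyi.
  rewrite io_idem.
  erewrite (ich I I I I y x (io I v) (io I v)) by tyi.
  rewrite io_idem. reflexivity.
Qed.

Ltac hnorm := repeat (erewrite <- hA by tyi).

Lemma lay_nest I u u' v v' x m n : tyg I x m n -> layg I u (layg I u' x v') v = layg I (u ++ u') x (v' ++ v).
Proof.
  intros. unfold layg.
  rewrite <- (io_app I u u'), <- (io_app I v' v).
  hnorm. reflexivity.
Qed.

Ltac absorb := repeat (rewrite io_idem || rewrite tb_idem || (erewrite absr by (tyi||leq)) || (erewrite absl by (tyi||leq))).

Lemma slide I u v1 v2 x y a b c d : tyg I x a b -> tyg I y c d ->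
 vcomp (layg I u x (v1 ++ d ++ v2)) (layg I (u ++ a ++ v1) y v2)
 = vcomp (layg I (u ++ b ++ v1) y v2) (layg I u x (v1 ++ c ++ v2)).
Proof.
  intros. unfold layg. rewrite <- !io_app. hnorm.
  repeat (erewrite ich by tyi). absorb. reflexivity.
Qed.

Lemma lay_l0 I x v m n : tyg I x m n -> layg I [] x v = hcomp x (io I v).
Proof.
  intros Hx. unfold layg. rewrite io_nil.
  replace (id1 A) with (id1 (cod1 (src2 (hcomp x (io I v))))).
  apply hcomp_id2l. erewrite ty_src by tyi. rewrite c1w_cod; auto.
Qed.
Lemma lay_r0 I x u m n : tyg I x m n -> layg I u x [] = hcomp (io I u) x.
Proof.
  intros Hx. unfold layg. rewrite io_nil.
  replace (id1 A) with (id1 (dom1 (src2 x))).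
  rewrite hcomp_id2r; auto. erewrite ty_src by tyi. rewrite c1w_dom; auto.
Qed.

Lemma lay_split I I' U V a b r m n k p q : tyg I a m n -> tyg I b k m -> tyg I' r p q -> q = U ++ k ++ V ->
  vcomp (layg I U (vcomp a b) V) r = vcomp (layg I U a V) (vcomp (layg I U b V) r).
Proof.
  intros; subst. erewrite <- lay_v by tyi. erewrite vA by tyi. reflexivity.
Qed.
Lemma lay_nest' I U V u v x m n : tyg I x m n -> layg I U (layg I u x v) V = layg I (U ++ u) x (v ++ V).
Proof. intros; eapply lay_nest; eauto. Qed.

Lemma lay_io I U V m : layg I U (io I m) V = io I (U ++ m ++ V).
Proof. unfold layg. rewrite !io_app. reflexivity. Qed.

Lemma absl' I r p q W : tyg I r p q -> W = q -> vcomp (io I W) r = r.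
Proof. intros; subst; eapply absl; eauto. Qed.

Lemma lay0 I x m n : tyg I x m n -> x = layg I [] x [].
Proof. intros; symmetry; eapply lay_nil; eauto. Qed.

Ltac lnorm := repeat rewrite app_nil_r; repeat rewrite <- app_assoc; cbn [app].
Ltac lnorm_in H := repeat rewrite app_nil_r in H; repeat rewrite <- app_assoc in H; cbn [app] in H.
Ltac vnorm := repeat (erewrite <- vA by tyi).
Ltac unlay := repeat (first [erewrite lay_split; [ | try solve [tyi] .. ]; [ | solve [leq] .. ]
   | erewrite lay_nest'; [ | try solve [tyi] .. ]; [ | solve [leq] .. ]
   | rewrite lay_io]); lnorm.
Ltac unlay_in H := repeat (first [erewrite lay_split in H; [ | try solve [tyi] .. ]; [ | solve [leq] .. ]
   | erewrite lay_nest' in H; [ | try solve [tyi] .. ]; [ | solve [leq] .. ]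
   | rewrite lay_io in H]); lnorm_in H.
Tactic Notation "rw" open_constr(e) := erewrite e; [ | try solve [tyi] .. ]; [ | solve [leq] .. ]; lnorm.
Tactic Notation "rwb" open_constr(e) := erewrite <- e; [ | try solve [tyi] .. ]; [ | solve [leq] .. ]; lnorm.
Ltac ab := repeat (erewrite absl'; [ | try solve [tyi] .. ]; [ | solve [leq] .. ]); lnorm.

Ltac ctx E U V r :=
  let E' := fresh "E" in subst;
  pose proof (f_equal (fun z => vcomp (lay U z V) r) E) as E'; cbv beta in E';
  unlay_in E'; lnorm; rewrite E'; try ab; try reflexivity.

Lemma slideA I I' x y v1 u U V v2 U' V' a b c d r p q : tyg I x a b -> tyg I y c d -> tyg I' r p q ->
  U = u ++ a ++ v1 -> V = v1 ++ d ++ v2 -> U' = u ++ b ++ v1 -> V' = v1 ++ c ++ v2 ->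
  q = u ++ a ++ v1 ++ c ++ v2 ->
  vcomp (layg I u x V) (vcomp (layg I U y v2) r) = vcomp (layg I U' y v2) (vcomp (layg I u x V') r).
Proof.
  intros; subst. erewrite vA by tyi. erewrite slide by eassumption. erewrite <- vA by tyi. reflexivity.
Qed.
Lemma slideB I I' x y v1 u U V v2 U' V' a b c d r p q : tyg I x a b -> tyg I y c d -> tyg I' r p q ->
  U = u ++ b ++ v1 -> V = v1 ++ c ++ v2 -> V' = v1 ++ d ++ v2 -> U' = u ++ a ++ v1 ->
  q = u ++ a ++ v1 ++ c ++ v2 ->
  vcomp (layg I U y v2) (vcomp (layg I u x V) r) = vcomp (layg I u x V') (vcomp (layg I U' y v2) r).
Proof.
  intros; subst. erewrite vA by tyi. erewrite <- slide by eassumption. erewrite <- vA by tyi. reflexivity.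
Qed.
Lemma MA i U V U1 V1 U2 V2 r p q : ty r p q -> U1 = U -> V1 = i :: V -> U2 = U ++ [i] -> V2 = V ->
  q = U ++ i :: i :: i :: V ->
  vcomp (lay U (mu i) V) (vcomp (lay U1 (mu i) V1) r)
  = vcomp (lay U (mu i) V) (vcomp (lay U2 (mu i) V2) r).
Proof.
  intros Hr ? ? ? ? ?.
  assert (E := bm_assoc _ _ (Sm i)). fold (mu i) (tb i) in E.
  change (tb i) with (io Ib [i]) in E.
  erewrite <- lay_l0, <- lay_r0 in E by tyi.
  rewrite (lay0 Ib (mu i) [i;i] [i] (ty_mu i)) in E at 1.
  rewrite (lay0 Ib (mu i) [i;i] [i] (ty_mu i)) in E at 3.
  ctx E U V r.
Qed.

Lemma MUl i U V U1 V1 r p q : ty r p q -> U1 = U ++ [i] -> V1 = V -> q = U ++ i :: V ->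
  vcomp (lay U (mu i) V) (vcomp (lay U1 (eta i) V1) r) = r.
Proof.
  intros Hr ? ? ?.
  assert (E := bm_unit_l _ _ (Sm i)). fold (mu i) (tb i) (eta i) in E.
  change (tb i) with (io Ib [i]) in E.
  erewrite <- lay_r0 in E by tyi.
  rewrite (lay0 Ib (mu i) [i;i] [i] (ty_mu i)) in E.
  ctx E U V r.
Qed.
Lemma MUr i U V U1 V1 r p q : ty r p q -> U1 = U -> V1 = i :: V -> q = U ++ i :: V ->
  vcomp (lay U (mu i) V) (vcomp (lay U1 (eta i) V1) r) = r.
Proof.
  intros Hr ? ? ?.
  assert (E := bm_unit_r _ _ (Sm i)). fold (mu i) (tb i) (eta i) in E.
  change (tb i) with (io Ib [i]) in E.
  erewrite <- lay_l0 in E by tyi.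
  rewrite (lay0 Ib (mu i) [i;i] [i] (ty_mu i)) in E.
  ctx E U V r.
Qed.

Ltac tolay E :=
  repeat (rewrite io_app in E; cbn [app] in E);
  repeat (erewrite <- lay_l0 in E by tyi);
  repeat (erewrite <- lay_r0 in E by tyi).

Section Wdl.
Variables i j : nat.
Variable lam : c2 K.
Hypothesis Hw : is_wdl (Sm j) (Sm i) lam.

Lemma ty_lam : ty lam [j; i] [i; j].
Proof.
  unfold is_wdl in Hw; cbv zeta in Hw.
  destruct Hw as (H1 & H2 & H3 & H4 & _). repeat split; auto.
Qed.

Ltac getax n :=
  let H := fresh "E" in
  pose proof Hw as H; unfold is_wdl in H; cbv zeta in H;
  do n (apply proj2 in H); try apply proj1 in H;
  fold (mu i) (mu j) (tb i) (tb j) (eta i) (eta j) in H;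
  change (tb i) with (io Ib [i]) in H; change (tb j) with (io Ib [j]) in H;
  pose proof ty_lam;
  tolay H;
  rewrite (lay0 Ib lam [j;i] [i;j] ty_lam) in H at 1.

Lemma M1 U V U1 V1 U2 V2 U3 V3 U4 V4 r p q : ty r p q ->
  U1 = U -> V1 = i :: V -> U2 = U ++ [i] -> V2 = V -> U3 = U -> V3 = j :: V ->
  U4 = U ++ [j] -> V4 = V -> q = U ++ j :: j :: i :: V ->
  vcomp (lay U lam V) (vcomp (lay U1 (mu j) V1) r)
  = vcomp (lay U2 (mu j) V2) (vcomp (lay U3 lam V3) (vcomp (lay U4 lam V4) r)).
Proof. intros. getax ltac:(4). ctx E U V r. Qed.

Lemma M2 U V U1 V1 U2 V2 U3 V3 U4 V4 r p q : ty r p q ->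
  U1 = U ++ [j] -> V1 = V -> U2 = U -> V2 = j :: V -> U3 = U ++ [i] -> V3 = V ->
  U4 = U -> V4 = i :: V -> q = U ++ j :: i :: i :: V ->
  vcomp (lay U lam V) (vcomp (lay U1 (mu i) V1) r)
  = vcomp (lay U2 (mu i) V2) (vcomp (lay U3 lam V3) (vcomp (lay U4 lam V4) r)).
Proof. intros. getax ltac:(5). ctx E U V r. Qed.

Lemma U1 U V U1 V1 U2 V2 U3 V3 U4 V4 U5 V5 r p q : ty r p q ->
  U1 = U -> V1 = i :: V -> U2 = U -> V2 = j :: V -> U3 = U ++ [i] -> V3 = V ->
  U4 = U ++ [i; j] -> V4 = V -> U5 = U ++ [i] -> V5 = V -> q = U ++ i :: V ->
  vcomp (lay U lam V) (vcomp (lay U1 (eta j) V1) r)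
  = vcomp (lay U2 (mu i) V2) (vcomp (lay U3 lam V3) (vcomp (lay U4 (eta i) V4)
      (vcomp (lay U5 (eta j) V5) r))).
Proof. intros. getax ltac:(6). ctx E U V r. Qed.

Lemma U2 U V U1 V1 U2 V2 U3 V3 U4 V4 U5 V5 r p q : ty r p q ->
  U1 = U ++ [j] -> V1 = V -> U2 = U ++ [i] -> V2 = V -> U3 = U -> V3 = j :: V ->
  U4 = U -> V4 = i :: j :: V -> U5 = U -> V5 = j :: V -> q = U ++ j :: V ->
  vcomp (lay U lam V) (vcomp (lay U1 (eta i) V1) r)
  = vcomp (lay U2 (mu j) V2) (vcomp (lay U3 lam V3) (vcomp (lay U4 (eta j) V4)
      (vcomp (lay U5 (eta i) V5) r))).
Proof. intros. getax ltac:(7). ctx E U V r. Qed.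

End Wdl.

Section Gen.
Variable i : nat.
Variable w : list nat.
Variable Lam : c2 K.
Hypothesis Hty : ty Lam (w ++ [i]) (i :: w).
Hypothesis HMult : forall U V U1 V1 U2 V2 U3 V3 U4 V4 r p q, ty r p q ->
  U1 = U ++ w -> V1 = V -> U2 = U -> V2 = w ++ V -> U3 = U ++ [i] -> V3 = V ->
  U4 = U -> V4 = i :: V -> q = U ++ w ++ i :: i :: V ->
  vcomp (lay U Lam V) (vcomp (lay U1 (mu i) V1) r)
  = vcomp (lay U2 (mu i) V2) (vcomp (lay U3 Lam V3) (vcomp (lay U4 Lam V4) r)).

Definition E := vcomp (lay [] (mu i) w) (vcomp (lay [i] Lam []) (lay (i :: w) (eta i) [])).

Lemma ty_E : ty E (i :: w) (i :: w).
Proof. unfold E. tyi. Qed.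

Lemma Edef U V U1 V1 U2 V2 U3 V3 r p q : ty r p q ->
  U1 = U -> V1 = w ++ V -> U2 = U ++ [i] -> V2 = V -> U3 = U ++ i :: w -> V3 = V ->
  q = U ++ i :: w ++ V ->
  vcomp (lay U E V) r
  = vcomp (lay U1 (mu i) V1) (vcomp (lay U2 Lam V2) (vcomp (lay U3 (eta i) V3) r)).
Proof. intros; subst. unfold E. unlay. reflexivity. Qed.

Lemma G1 U V U' V' r p q : ty r p q -> U' = U -> V' = V -> q = U ++ w ++ i :: V ->
  vcomp (lay U E V) (vcomp (lay U' Lam V') r) = vcomp (lay U' Lam V') r.
Proof.
  intros; subst.
  rw Edef.
  rw (slideB _ _ Lam (eta i) []).
  rwb HMult.
  rw MUl. reflexivity.
Qed.

Lemma G2 U V U1 V1 U2 V2 U3 V3 r p q : ty r p q -> U1 = U -> V1 = w ++ V ->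
  U2 = U -> V2 = w ++ V -> U3 = U ++ [i] -> V3 = V -> q = U ++ i :: i :: w ++ V ->
  vcomp (lay U E V) (vcomp (lay U1 (mu i) V1) r)
  = vcomp (lay U2 (mu i) V2) (vcomp (lay U3 E V3) r).
Proof.
  intros; subst. pose proof ty_E.
  rw Edef.
  rw (slideB _ _ (mu i) (eta i) w).
  rw (slideB _ _ (mu i) Lam []).
  rw MA.
  rwb Edef. reflexivity.
Qed.

Lemma G3 U V U1 V1 r p q : ty r p q -> U1 = U -> V1 = V -> q = U ++ i :: w ++ V ->
  vcomp (lay U E V) (vcomp (lay U1 E V1) r) = vcomp (lay U E V) r.
Proof.
  intros; subst. pose proof ty_E.
  rw (Edef U V _ _ _ _ _ _ r).
  rw G2. rw G1. rwb Edef. reflexivity.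
Qed.

Lemma G4 U V U1 V1 U2 V2 U3 V3 r p q : ty r p q -> U1 = U -> V1 = w ++ V ->
  U2 = U -> V2 = V -> U3 = U ++ w -> V3 = V -> q = U ++ w ++ V ->
  vcomp (lay U E V) (vcomp (lay U1 (eta i) V1) r)
  = vcomp (lay U2 Lam V2) (vcomp (lay U3 (eta i) V3) r).
Proof.
  intros; subst. pose proof ty_E.
  rw Edef.
  rw (slideB _ _ (eta i) (eta i) w).
  rw (slideB _ _ (eta i) Lam []).
  rw MUr. reflexivity.
Qed.

Lemma G5 U V U1 V1 U2 V2 U3 V3 r p q : ty r p q -> U1 = U -> V1 = w ++ V ->
  U2 = U ++ [i] -> V2 = V -> U3 = U -> V3 = i :: V -> q = U ++ i :: w ++ i :: V ->
  vcomp (lay U1 (mu i) V1) (vcomp (lay U2 Lam V2) (vcomp (lay U3 E V3) r))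
  = vcomp (lay U1 (mu i) V1) (vcomp (lay U2 Lam V2) r).
Proof.
  intros; subst. pose proof ty_E.
  rw Edef.
  rw (slideB _ _ (mu i) Lam []).
  rw MA.
  rwb HMult.
  rw MUr. reflexivity.
Qed.

End Gen.

Section GenM.
Variable i : nat.
Variable w : list nat.
Variable Lam : c2 K.
Hypothesis Hty : ty Lam (i :: w) (w ++ [i]).
Hypothesis HMult : forall U V U1 V1 U2 V2 U3 V3 U4 V4 r p q, ty r p q ->
  U1 = U -> V1 = w ++ V -> U2 = U ++ w -> V2 = V -> U3 = U -> V3 = i :: V ->
  U4 = U ++ [i] -> V4 = V -> q = U ++ i :: i :: w ++ V ->
  vcomp (lay U Lam V) (vcomp (lay U1 (mu i) V1) r)
  = vcomp (lay U2 (mu i) V2) (vcomp (lay U3 Lam V3) (vcomp (lay U4 Lam V4) r)).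

Definition E' := vcomp (lay w (mu i) []) (vcomp (lay [] Lam [i]) (lay [] (eta i) (w ++ [i]))).

Lemma ty_E' : ty E' (w ++ [i]) (w ++ [i]).
Proof. unfold E'. tyi. Qed.

Lemma Edef' U V U1 V1 U2 V2 U3 V3 r p q : ty r p q ->
  U1 = U ++ w -> V1 = V -> U2 = U -> V2 = i :: V -> U3 = U -> V3 = w ++ i :: V ->
  q = U ++ w ++ i :: V ->
  vcomp (lay U E' V) r
  = vcomp (lay U1 (mu i) V1) (vcomp (lay U2 Lam V2) (vcomp (lay U3 (eta i) V3) r)).
Proof. intros; subst. unfold E'. unlay. reflexivity. Qed.

Lemma G1' U V U' V' r p q : ty r p q -> U' = U -> V' = V -> q = U ++ i :: w ++ V ->
  vcomp (lay U E' V) (vcomp (lay U' Lam V') r) = vcomp (lay U' Lam V') r.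
Proof.
  intros; subst.
  rw Edef'.
  rw (slideA _ _ (eta i) Lam []).
  rwb HMult.
  rw MUr. reflexivity.
Qed.

Lemma G2' U V U1 V1 U2 V2 U3 V3 r p q : ty r p q -> U1 = U ++ w -> V1 = V ->
  U2 = U ++ w -> V2 = V -> U3 = U -> V3 = i :: V -> q = U ++ w ++ i :: i :: V ->
  vcomp (lay U E' V) (vcomp (lay U1 (mu i) V1) r)
  = vcomp (lay U2 (mu i) V2) (vcomp (lay U3 E' V3) r).
Proof.
  intros; subst. pose proof ty_E'.
  rw Edef'.
  rw (slideA _ _ (eta i) (mu i) w).
  rw (slideA _ _ Lam (mu i) []).
  rwb MA.
  rwb Edef'. reflexivity.
Qed.

Lemma G3' U V U1 V1 r p q : ty r p q -> U1 = U -> V1 = V -> q = U ++ w ++ i :: V ->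
  vcomp (lay U E' V) (vcomp (lay U1 E' V1) r) = vcomp (lay U E' V) r.
Proof.
  intros; subst. pose proof ty_E'.
  rw (Edef' U V _ _ _ _ _ _ r).
  rw G2'. rw G1'. rwb Edef'. reflexivity.
Qed.

Lemma G4' U V U1 V1 U2 V2 U3 V3 r p q : ty r p q -> U1 = U ++ w -> V1 = V ->
  U2 = U -> V2 = V -> U3 = U -> V3 = w ++ V -> q = U ++ w ++ V ->
  vcomp (lay U E' V) (vcomp (lay U1 (eta i) V1) r)
  = vcomp (lay U2 Lam V2) (vcomp (lay U3 (eta i) V3) r).
Proof.
  intros; subst. pose proof ty_E'.
  rw Edef'.
  rw (slideA _ _ (eta i) (eta i) w).
  rw (slideA _ _ Lam (eta i) []).
  rw MUl. reflexivity.
Qed.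

Lemma G5' U V U1 V1 U2 V2 U3 V3 r p q : ty r p q -> U1 = U ++ w -> V1 = V ->
  U2 = U -> V2 = i :: V -> U3 = U ++ [i] -> V3 = V -> q = U ++ i :: w ++ i :: V ->
  vcomp (lay U1 (mu i) V1) (vcomp (lay U2 Lam V2) (vcomp (lay U3 E' V3) r))
  = vcomp (lay U1 (mu i) V1) (vcomp (lay U2 Lam V2) r).
Proof.
  intros; subst. pose proof ty_E'.
  rw Edef'.
  rw (slideA _ _ Lam (mu i) []).
  rwb MA.
  rwb HMult.
  rw MUl. reflexivity.
Qed.

End GenM.

Section Wdl2.
Variables i j : nat.
Variable lam : c2 K.
Hypothesis Hw : is_wdl (Sm j) (Sm i) lam.

Lemma e12 U V r p q : ty r p q -> q = U ++ i :: j :: V ->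
  vcomp (lay U (E i [j] lam) V) r = vcomp (lay U (E' j [i] lam) V) r.
Proof.
  intros; subst. pose proof (ty_lam _ _ _ Hw).
  rw Edef.
  rw (U2 _ _ _ Hw).
  rw (slideA _ _ (mu i) (mu j) []).
  rw (slideA _ _ (eta j) (eta i) []).
  rwb (U1 _ _ _ Hw).
  rwb Edef'. reflexivity.
Qed.
End Wdl2.

Lemma lay2k U V x m n : ty x m n ->
  lay U x V = vcomp (layk U x V) (vcomp (layk [] (io Ib U) (m ++ V)) (layk (U ++ m) (io Ib V) [])).
Proof.
  intros.
  erewrite (lay_l0 Ik (io Ib U)), (lay_r0 Ik (io Ib V)) by tyi.
  unfold layg. rewrite <- !io_app. hnorm.
  repeat (erewrite ich by tyi). absorb. reflexivity.
Qed.
Lemma lay2k' U V x m n : ty x m n ->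
  lay U x V = vcomp (layk [] (io Ib U) (n ++ V)) (vcomp (layk (U ++ n) (io Ib V) []) (layk U x V)).
Proof.
  intros.
  erewrite (lay_l0 Ik (io Ib U)), (lay_r0 Ik (io Ib V)) by tyi.
  unfold layg. rewrite <- !io_app. hnorm.
  repeat (erewrite ich by tyi). absorb. reflexivity.
Qed.

Lemma io_tb_absr k a b : vcomp (io Ib (a ++ k :: b)) (layk a (tb k) b) = io Ib (a ++ k :: b).
Proof.
  change (io Ib (a ++ k :: b)) with (io Ib (a ++ [k] ++ b)).
  rewrite <- !io_app. change (io Ib [k]) with (tb k). unfold layg.
  repeat (erewrite ich by tyi). absorb. cbn [app]. reflexivity.
Qed.
Lemma io_tb_absl k a b : vcomp (layk a (tb k) b) (io Ib (a ++ k :: b)) = io Ib (a ++ k :: b).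
Proof.
  change (io Ib (a ++ k :: b)) with (io Ib (a ++ [k] ++ b)).
  rewrite <- !io_app. change (io Ib [k]) with (tb k). unfold layg.
  repeat (erewrite ich by tyi). absorb. cbn [app]. reflexivity.
Qed.

Lemma absU a x U V U1 V1 k b m n r p q : ty x m n -> tyk r p q ->
  U1 = U ++ a -> m = a ++ k :: b -> V1 = b ++ V -> q = U ++ m ++ V ->
  vcomp (layk U x V) (vcomp (layk U1 (tb k) V1) r) = vcomp (layk U x V) r.
Proof.
  intros; subst.
  erewrite vA by tyi. f_equal.
  erewrite <- lay_nest by tyi. erewrite lay_v by tyi. f_equal.
  erewrite <- (absr Ib x) at 1 by (tyi || leq). erewrite <- vA by tyi.
  rewrite io_tb_absr. erewrite absr by (tyi || leq). reflexivity.
Qed.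

Lemma absD a x U V U1 V1 k b m n r p q : ty x m n -> tyk r p q ->
  U1 = U ++ a -> n = a ++ k :: b -> V1 = b ++ V -> q = U ++ m ++ V ->
  vcomp (layk U1 (tb k) V1) (vcomp (layk U x V) r) = vcomp (layk U x V) r.
Proof.
  intros; subst.
  erewrite vA by tyi. f_equal.
  erewrite <- lay_nest by tyi. erewrite lay_v by tyi. f_equal.
  erewrite <- (absl Ib x) at 1 by (tyi || leq). erewrite vA by tyi.
  rewrite io_tb_absl. erewrite absl by (tyi || leq). reflexivity.
Qed.

Lemma iosplit P Q k a r p q : tyk r p q -> q = P ++ k :: a ++ Q ->
  vcomp (layk P (io Ib (k :: a)) Q) r
  = vcomp (layk P (tb k) (a ++ Q)) (vcomp (layk (P ++ [k]) (io Ib a) Q) r).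
Proof.
  intros; subst. erewrite vA by tyi. f_equal.
  change (io Ib (k :: a)) with (io Ib ([k] ++ a)).
  rewrite <- (io_app Ib [k] a). change (io Ib [k]) with (tb k).
  unfold layg. rewrite <- !io_app. hnorm.
  repeat (erewrite ich by tyi). absorb. reflexivity.
Qed.

Lemma ionil P Q r p q : tyk r p q -> q = P ++ Q -> vcomp (layk P (io Ib []) Q) r = r.
Proof.
  intros; subst. change (io Ib []) with (io Ik []). rewrite lay_io.
  erewrite absl by (tyi || leq). reflexivity.
Qed.

Lemma lay2kt U V x m n r p q : ty x m n -> tyk r p q -> q = U ++ m ++ V ->
  vcomp (lay U x V) r = vcomp (layk U x V) (vcomp (layk [] (io Ib U) (m ++ V)) (vcomp (layk (U ++ m) (io Ib V) []) r)).
Proof. intros; subst. erewrite lay2k by eauto. vnorm. reflexivity. Qed.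
Lemma lay2kt' U V x m n r p q : ty x m n -> tyk r p q -> q = U ++ m ++ V ->
  vcomp (lay U x V) r = vcomp (layk [] (io Ib U) (n ++ V)) (vcomp (layk (U ++ n) (io Ib V) []) (vcomp (layk U x V) r)).
Proof. intros; subst. erewrite lay2k' by eauto. vnorm. reflexivity. Qed.
Lemma eq_tail x y u v : tyk x u v -> tyk y u v -> vcomp x (io Ik u) = vcomp y (io Ik u) -> x = y.
Proof. intros Hx Hy E. erewrite !absr in E by (tyi || leq). exact E. Qed.

Lemma dupk U V k r p q : tyk r p q -> q = U ++ k :: V ->
  vcomp (layk U (tb k) V) (vcomp (layk U (tb k) V) r) = vcomp (layk U (tb k) V) r.
Proof.
  intros; subst. erewrite vA by tyi. f_equal. erewrite lay_v by tyi. rewrite tb_idem. reflexivity.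
Qed.

Ltac io_clean := repeat (first [ rw ionil | rw iosplit ]).

Section Rside.
Variables pi qi : nat.
Variables l0p l0q : c2 K.
Hypothesis Hp : is_wdl (Sm pi) (Sm 0) l0p.
Hypothesis Hq : is_wdl (Sm qi) (Sm 0) l0q.

Definition LR := vcomp (lay [] l0p [qi]) (lay [pi] l0q []).

Lemma ty_LR : ty LR [pi; qi; 0] [0; pi; qi].
Proof. pose proof (ty_lam _ _ _ Hp); pose proof (ty_lam _ _ _ Hq). unfold LR. tyi. Qed.

Lemma LRdef I U V U1 V1 U2 V2 r p q : tyg I r p q -> U1 = U -> V1 = qi :: V -> U2 = U ++ [pi] -> V2 = V ->
  q = U ++ pi :: qi :: 0 :: V ->
  vcomp (lay U LR V) r = vcomp (lay U1 l0p V1) (vcomp (lay U2 l0q V2) r).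
Proof.
  pose proof (ty_lam _ _ _ Hp); pose proof (ty_lam _ _ _ Hq).
  intros; subst. unfold LR. unlay. reflexivity.
Qed.

Lemma Rconv : lam_right S0 (Sm pi) (Sm qi) l0p l0q = E 0 [pi; qi] LR.
Proof.
  pose proof (ty_lam _ _ _ Hp); pose proof (ty_lam _ _ _ Hq). pose proof ty_LR.
  unfold lam_right, wl, wr.
  change (vcomp (hcomp (mu 0) (io Ik [pi;qi])) (vcomp (layk [0] l0p [qi])
    (vcomp (hcomp (io Ik [0]) (hcomp (io Ik [pi]) l0q)) (hcomp (io Ik [0;pi;qi]) (eta 0))))
    = E 0 [pi; qi] LR).
  erewrite <- (lay_l0 Ik (mu 0)), <- (lay_r0 Ik (eta 0)), <- (lay_r0 Ik l0q), <- (lay_r0 Ik (layk [pi] l0q [])) by tyi.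
  erewrite lay_nest by tyi. cbn [app].
  apply eq_tail with [0;pi;qi] [0;pi;qi]; [tyi | unfold E; tyi | ].
  unfold E. vnorm.
  rw LRdef.
  rw (lay2kt' [0;pi;qi] [] (eta 0)). io_clean.
  rw (lay2kt' [0;pi] [] l0q). io_clean.
  rw (lay2kt' [0] [qi] l0p). io_clean.
  rw (lay2kt [] [pi;qi] (mu 0)). io_clean.
  rw (slideB _ _ (tb 0) (tb qi)). rw (slideB _ _ (tb 0) (tb pi)).  rw (absU _ (mu 0)). rw dupk.
  rw (slideB _ _ l0p (tb qi)). rw (absD _ l0p).
  rw (slideB _ _ (tb 0) (tb qi)). rw (slideB _ _ (tb 0) l0p). rw (absU _ (mu 0)).
  rw (slideB _ _ (tb pi) (tb qi)). rw (absU _ l0p).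
  rw (absD _ l0q).
  rw (slideB _ _ (tb 0) l0q). rw (slideB _ _ (tb 0) l0p). rw (absU _ (mu 0)).
  rw (slideB _ _ (tb pi) l0q). rw (absU _ l0p).
  rw (absU _ l0q).
  reflexivity.
Qed.

Lemma LRmult : forall U V U1 V1 U2 V2 U3 V3 U4 V4 r p q, ty r p q ->
  U1 = U ++ [pi; qi] -> V1 = V -> U2 = U -> V2 = [pi; qi] ++ V -> U3 = U ++ [0] -> V3 = V ->
  U4 = U -> V4 = 0 :: V -> q = U ++ [pi; qi] ++ 0 :: 0 :: V ->
  vcomp (lay U LR V) (vcomp (lay U1 (mu 0) V1) r)
  = vcomp (lay U2 (mu 0) V2) (vcomp (lay U3 LR V3) (vcomp (lay U4 LR V4) r)).
Proof.
  pose proof (ty_lam _ _ _ Hp); pose proof (ty_lam _ _ _ Hq). pose proof ty_LR.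
  intros; subst. lnorm.
  repeat rw LRdef.
  rw (M2 _ _ _ Hq). rw (M2 _ _ _ Hp).
  rw (slideA _ _ l0p l0q []).
  reflexivity.
Qed.

Definition R := E 0 [pi; qi] LR.
Definition lbp := E 0 [pi] l0p.
Definition lbq := E 0 [qi] l0q.

Lemma ty_R : ty R [0; pi; qi] [0; pi; qi].
Proof. apply ty_E. apply ty_LR. Qed.
Lemma ty_lbp : ty lbp [0; pi] [0; pi].
Proof. apply ty_E. apply (ty_lam _ _ _ Hp). Qed.
Lemma ty_lbq : ty lbq [0; qi] [0; qi].
Proof. apply ty_E. apply (ty_lam _ _ _ Hq). Qed.

Ltac prep := pose proof (ty_lam _ _ _ Hp) as TP; pose proof (ty_lam _ _ _ Hq) as TQ; pose proof ty_LR as TLR;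
  pose proof ty_R as TR; pose proof ty_lbp as TBP; pose proof ty_lbq as TBQ.

Lemma R3 U V U1 V1 U2 V2 U3 V3 r p q : ty r p q -> U1 = U -> V1 = qi :: V ->
  U2 = U -> V2 = qi :: V -> U3 = U ++ [pi] -> V3 = V -> q = U ++ pi :: 0 :: qi :: V ->
  vcomp (lay U R V) (vcomp (lay U1 l0p V1) r) = vcomp (lay U2 l0p V2) (vcomp (lay U3 lbq V3) r).
Proof.
  prep. intros; subst. unfold R, lbq.
  rw (Edef 0 [pi;qi] LR TLR).
  rw LRdef.
  rw (slideB _ _ l0p (eta 0) [qi]).
  rw (slideB _ _ l0p l0q []).
  rwb (M2 _ _ _ Hp).
  rwb (Edef 0 [qi] l0q TQ).
  reflexivity.
Qed.

Lemma R1b U V U1 V1 r p q : ty r p q -> U1 = U -> V1 = qi :: V -> q = U ++ 0 :: pi :: qi :: V ->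
  vcomp (lay U1 lbp V1) (vcomp (lay U R V) r) = vcomp (lay U R V) r.
Proof.
  prep. intros; subst. unfold R, lbp.
  rw (Edef 0 [pi;qi] LR TLR _ _ _ _ _ _ _ _ r).
  rw (G2 0 [pi] l0p TP).
  rw LRdef.
  rw (G1 0 [pi] l0p TP (M2 _ _ _ Hp)).
  rwb LRdef.
  rwb (Edef 0 [pi;qi] LR TLR).
  reflexivity.
Qed.

Lemma R1a U V U1 V1 r p q : ty r p q -> U1 = U -> V1 = qi :: V -> q = U ++ 0 :: pi :: qi :: V ->
  vcomp (lay U R V) (vcomp (lay U1 lbp V1) r) = vcomp (lay U R V) r.
Proof.
  prep. intros; subst. 
  unfold lbp. rw (Edef 0 [pi] l0p TP). fold lbp.
  unfold R. rw (G2 0 [pi;qi] LR TLR). fold R.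
  rw R3. unfold lbq.
  rw (G4 0 [qi] l0q TQ).
  rwb LRdef. unfold R. rwb (Edef 0 [pi;qi] LR TLR).
  reflexivity.
Qed.

Lemma Rlin U V U1 V1 r p q : ty r p q -> U1 = U ++ [0; pi] -> V1 = V ->
  q = U ++ 0 :: pi :: qi :: qi :: V ->
  vcomp (lay U R V) (vcomp (lay U1 (mu qi) V1) r) = vcomp (lay U1 (mu qi) V1) (vcomp (lay U R (qi :: V)) r).
Proof.
  prep. pose proof (ty_E' qi [0] l0q TQ). intros; subst. unfold R.
  rw (Edef 0 [pi;qi] LR TLR _ _ _ _ _ _ _ _ (vcomp (lay (U ++ [0; pi]) (mu qi) V) r)).
  rw LRdef.
  rw (slideB _ _ (mu qi) (eta 0) []).
  rw (M1 _ _ _ Hq).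
  rw (U2 _ _ _ Hq).
  rwb (Edef' qi [0] l0q TQ (U ++ [0;pi;qi]) V).
  rw (G5' qi [0] l0q TQ (M1 _ _ _ Hq) (U ++ [0;pi])).
  rw (slideA _ _ l0p (mu qi) []).
  rw (slideA _ _ (mu 0) (mu qi) [pi]).
  rwb LRdef. rwb (Edef 0 [pi;qi] LR TLR).
  reflexivity.
Qed.
End Rside.

Section Lside.
Variables ki li : nat.
Variables lk2 ll2 : c2 K.
Hypothesis Hk : is_wdl (Sm 2) (Sm ki) lk2.
Hypothesis Hl : is_wdl (Sm 2) (Sm li) ll2.

Definition LL := vcomp (lay [ki] ll2 []) (lay [] lk2 [li]).

Lemma ty_LL : ty LL [2; ki; li] [ki; li; 2].
Proof. pose proof (ty_lam _ _ _ Hk); pose proof (ty_lam _ _ _ Hl). unfold LL. tyi. Qed.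

Lemma LLdef I U V U1 V1 U2 V2 r p q : tyg I r p q -> U2 = U -> V2 = li :: V -> U1 = U ++ [ki] -> V1 = V ->
  q = U ++ 2 :: ki :: li :: V ->
  vcomp (lay U LL V) r = vcomp (lay U1 ll2 V1) (vcomp (lay U2 lk2 V2) r).
Proof.
  pose proof (ty_lam _ _ _ Hk); pose proof (ty_lam _ _ _ Hl).
  intros; subst. unfold LL. unlay. reflexivity.
Qed.

Lemma LLmult : forall U V U1 V1 U2 V2 U3 V3 U4 V4 r p q, ty r p q ->
  U1 = U -> V1 = [ki; li] ++ V -> U2 = U ++ [ki; li] -> V2 = V -> U3 = U -> V3 = 2 :: V ->
  U4 = U ++ [2] -> V4 = V -> q = U ++ 2 :: 2 :: [ki; li] ++ V ->
  vcomp (lay U LL V) (vcomp (lay U1 (mu 2) V1) r)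
  = vcomp (lay U2 (mu 2) V2) (vcomp (lay U3 LL V3) (vcomp (lay U4 LL V4) r)).
Proof.
  pose proof (ty_lam _ _ _ Hk); pose proof (ty_lam _ _ _ Hl). pose proof ty_LL.
  intros; subst. lnorm.
  repeat rw LLdef.
  rw (M1 _ _ _ Hk). rw (M1 _ _ _ Hl).
  rw (slideB _ _ lk2 ll2 []).
  reflexivity.
Qed.

Definition Lm := E' 2 [ki; li] LL.
Definition lbk := E' 2 [ki] lk2.
Definition lbl := E' 2 [li] ll2.

Lemma ty_Lm : ty Lm [ki; li; 2] [ki; li; 2].
Proof. apply ty_E'. apply ty_LL. Qed.
Lemma ty_lbk : ty lbk [ki; 2] [ki; 2].
Proof. apply ty_E'. apply (ty_lam _ _ _ Hk). Qed.
Lemma ty_lbl : ty lbl [li; 2] [li; 2].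
Proof. apply ty_E'. apply (ty_lam _ _ _ Hl). Qed.

Ltac prep := pose proof (ty_lam _ _ _ Hk) as TK; pose proof (ty_lam _ _ _ Hl) as TL; pose proof ty_LL as TLL;
  pose proof ty_Lm as TLm; pose proof ty_lbk as TBK; pose proof ty_lbl as TBL.

Lemma L6 U V U1 V1 V2 r p q : ty r p q -> U1 = U ++ [ki] -> V1 = V -> V2 = li :: V ->
  q = U ++ ki :: 2 :: li :: V ->
  vcomp (lay U Lm V) (vcomp (lay U1 ll2 V1) r) = vcomp (lay U1 ll2 V1) (vcomp (lay U lbk V2) r).
Proof.
  prep. intros; subst. unfold Lm, lbk.
  rw (Edef' 2 [ki;li] LL TLL U V).
  rw LLdef.
  rw (slideA _ _ (eta 2) ll2 [ki]).
  rw (slideA _ _ lk2 ll2 []).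
  rwb (M1 _ _ _ Hl (U ++ [ki])).
  rwb (Edef' 2 [ki] lk2 TK U (li :: V)).
  reflexivity.
Qed.

Lemma L4b U V U1 V1 r p q : ty r p q -> U1 = U ++ [ki] -> V1 = V -> q = U ++ ki :: li :: 2 :: V ->
  vcomp (lay U1 lbl V1) (vcomp (lay U Lm V) r) = vcomp (lay U Lm V) r.
Proof.
  prep. intros; subst. unfold Lm, lbl.
  rw (Edef' 2 [ki;li] LL TLL U V).
  rw (G2' 2 [li] ll2 TL (U ++ [ki]) V).
  rw LLdef.
  rw (G1' 2 [li] ll2 TL (M1 _ _ _ Hl)).
  rwb LLdef.
  rwb (Edef' 2 [ki;li] LL TLL U V).
  reflexivity.
Qed.

Lemma L4a U V U1 V1 r p q : ty r p q -> U1 = U ++ [ki] -> V1 = V -> q = U ++ ki :: li :: 2 :: V ->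
  vcomp (lay U Lm V) (vcomp (lay U1 lbl V1) r) = vcomp (lay U Lm V) r.
Proof.
  prep. intros; subst.
  unfold lbl. rw (Edef' 2 [li] ll2 TL (U ++ [ki]) V). fold lbl.
  unfold Lm. rw (G2' 2 [ki;li] LL TLL U V). fold Lm.
  rw L6. unfold lbk.
  rw (G4' 2 [ki] lk2 TK U (li :: 2 :: V)).
  rwb LLdef. unfold Lm. rwb (Edef' 2 [ki;li] LL TLL U V).
  reflexivity.
Qed.

Lemma Llin U V V1 r p q : ty r p q -> V1 = li :: 2 :: V -> q = U ++ ki :: ki :: li :: 2 :: V ->
  vcomp (lay U Lm V) (vcomp (lay U (mu ki) V1) r) = vcomp (lay U (mu ki) V1) (vcomp (lay (U ++ [ki]) Lm V) r).
Proof.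
  prep. pose proof (ty_E ki [2] lk2 TK). intros; subst. unfold Lm.
  rw (Edef' 2 [ki;li] LL TLL U V).
  rw LLdef.
  rw (slideA _ _ (eta 2) (mu ki) []).
  rw (M2 _ _ _ Hk).
  rw (U1 _ _ _ Hk).
  rwb (Edef ki [2] lk2 TK U (ki :: li :: 2 :: V)).
  rw (G5 ki [2] lk2 TK (M2 _ _ _ Hk) U (li :: 2 :: V)).
  rw (slideB _ _ (mu ki) ll2 []).
  rw (slideB _ _ (mu ki) (mu 2) [li]).
  rwb LLdef. rwb (Edef' 2 [ki;li] LL TLL (U ++ [ki]) V).
  reflexivity.
Qed.

Lemma Lconv : lam_left (Sm ki) (Sm li) S2 lk2 ll2 = E' 2 [ki; li] LL.
Proof.
  prep.
  unfold lam_left, wl, wr.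
  change (vcomp (hcomp (io Ik [ki;li]) (mu 2)) (vcomp (layk [ki] ll2 [2])
    (vcomp (hcomp lk2 (io Ik [li;2])) (hcomp (eta 2) (io Ik [ki;li;2]))))
    = E' 2 [ki; li] LL).
  erewrite <- (lay_r0 Ik (mu 2)), <- (lay_l0 Ik lk2), <- (lay_l0 Ik (eta 2)) by tyi.
  apply eq_tail with [ki;li;2] [ki;li;2]; [tyi | unfold E'; tyi | ].
  unfold E'. vnorm.
  rw LLdef.
  rw (lay2kt' [] [ki;li;2] (eta 2)). io_clean.
  rw (lay2kt' [] [li;2] lk2). io_clean.
  rw (lay2kt' [ki] [2] ll2). io_clean.
  rw (lay2kt [ki;li] [] (mu 2)). io_clean.
  rw (slideA _ _ (tb ki) (tb 2)). rw (slideA _ _ (tb li) (tb 2)). rw (slideA _ _ (tb ki) (tb 2)).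
  rw (absU _ (mu 2)).
  rw (slideB _ _ (tb ki) (tb li)). rw (absD _ ll2).
  rw dupk. rw (slideA _ _ (tb ki) ll2).
  rw (slideA _ _ (tb ki) (tb li)). rw (absU _ ll2).
  rw (slideA _ _ (tb ki) (tb 2)). rw (slideA _ _ ll2 (tb 2)). rw (absU _ (mu 2)).
  rw (absD _ lk2).
  rw (absU _ lk2).
  rw (slideA _ _ lk2 (tb li)). rw (absU _ ll2).
  rw (slideA _ _ lk2 (tb 2)). rw (slideA _ _ ll2 (tb 2)). rw (absU _ (mu 2)).
  reflexivity.
Qed.

End Lside.

Lemma convAr y m n k : ty y m n -> vcomp (io Ib (n ++ [k])) (hcomp y (io Ik [k])) = lay [] y [k].
Proof. intros. erewrite lay_l0 by eauto. rewrite <- io_app. erewrite ich by tyi. absorb. reflexivity. Qed.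
Lemma convBr y m n k : ty y m n -> vcomp (hcomp y (io Ik [k])) (io Ib (m ++ [k])) = lay [] y [k].
Proof. intros. erewrite lay_l0 by eauto. rewrite <- io_app. erewrite ich by tyi. absorb. reflexivity. Qed.
Lemma convAl y m n k : ty y m n -> vcomp (io Ib (k :: n)) (hcomp (io Ik [k]) y) = lay [k] y [].
Proof.
  intros. erewrite lay_r0 by eauto. change (io Ib (k :: n)) with (io Ib ([k] ++ n)). rewrite <- io_app.
  erewrite ich by tyi. absorb. reflexivity.
Qed.
Lemma convBl y m n k : ty y m n -> vcomp (hcomp (io Ik [k]) y) (io Ib (k :: m)) = lay [k] y [].
Proof.
  intros. erewrite lay_r0 by eauto. change (io Ib (k :: m)) with (io Ib ([k] ++ m)). rewrite <- io_app.
  erewrite ich by tyi. absorb. reflexivity.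
Qed.

Lemma ins_r X W u v p : ty X u v -> tyk W p u -> vcomp X W = vcomp X (vcomp (io Ib u) W).
Proof. intros. erewrite vA by tyi. erewrite absr by (tyi || leq). reflexivity. Qed.
Lemma ins_l X W u v p : ty X u v -> tyk W v p -> vcomp W X = vcomp (vcomp W (io Ib v)) X.
Proof. intros. erewrite <- vA by tyi. erewrite absl by (tyi || leq). reflexivity. Qed.

Lemma convC1 x y h a k n m : ty x (h :: a) n -> ty y m (a ++ [k]) ->
  vcomp (hcomp x (io Ik [k])) (hcomp (io Ik [h]) y) = vcomp (lay [] x [k]) (lay [h] y []).
Proof.
  intros.
  erewrite <- (lay_l0 Ik x), <- (lay_r0 Ik y) by tyi.
  apply eq_tail with (h :: m) (n ++ [k]); [tyi | tyi | ]. vnorm.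
  rw (lay2kt [] [k] x). io_clean.
  rw (lay2kt' [h] [] y). io_clean.
  rw (slideB _ _ (tb h) (tb k) a).
  rw (absU [] x).
  rw (absD a y).
  reflexivity.
Qed.

Lemma convC2 x y h a k n m : ty x (a ++ [k]) n -> ty y m (h :: a) ->
  vcomp (hcomp (io Ik [h]) x) (hcomp y (io Ik [k])) = vcomp (lay [h] x []) (lay [] y [k]).
Proof.
  intros.
  erewrite <- (lay_r0 Ik x), <- (lay_l0 Ik y) by tyi.
  apply eq_tail with (m ++ [k]) (h :: n); [tyi | tyi | ]. vnorm.
  rw (lay2kt [h] [] x). io_clean.
  rw (lay2kt' [] [k] y). io_clean.
  rw (slideA _ _ (tb h) (tb k) a).
  rw (absU a x).
  rw (absD [] y).
  reflexivity.
Qed.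

Lemma eq_tail_b x y u v : ty x u v -> ty y u v -> vcomp x (io Ib u) = vcomp y (io Ib u) -> x = y.
Proof. intros Hx Hy E. erewrite !absr in E by (tyi || leq). exact E. Qed.

Section Main.
Variables l01 l02 l12 : c2 K.
Hypothesis Hc : wdl2_cell S0 S1 S2 l01 l02 l12.

Lemma W01 : is_wdl (Sm 1) (Sm 0) l01. Proof. apply Hc. Qed.
Lemma W02 : is_wdl (Sm 2) (Sm 0) l02. Proof. apply Hc. Qed.
Lemma W12 : is_wdl (Sm 2) (Sm 1) l12. Proof. apply Hc. Qed.
Lemma T01 : ty l01 [1;0] [0;1]. Proof. apply (ty_lam _ _ _ W01). Qed.
Lemma T02 : ty l02 [2;0] [0;2]. Proof. apply (ty_lam _ _ _ W02). Qed.
Lemma T12 : ty l12 [2;1] [1;2]. Proof. apply (ty_lam _ _ _ W12). Qed.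

Lemma YB U V U1 V1 U2 V2 U3 V3 U4 V4 U5 V5 r p q : ty r p q ->
  U5 = U -> V5 = 1 :: V -> U3 = U -> V3 = 0 :: V -> U1 = U -> V1 = 2 :: V -> U2 = U ++ [1] -> V2 = V ->
  U4 = U ++ [0] -> V4 = V -> q = U ++ 2 :: 1 :: 0 :: V ->
  vcomp (lay U1 l01 V1) (vcomp (lay U2 l02 V2) (vcomp (lay U3 l12 V3) r))
  = vcomp (lay U4 l12 V4) (vcomp (lay U5 l02 V5) (vcomp (lay (U ++ [2]) l01 V) r)).
Proof.
  pose proof T01; pose proof T02; pose proof T12.
  intros. assert (E := proj2 (proj2 (proj2 Hc))). unfold yang_baxter in E.
  change (bm_tb S0) with (io Ib [0]) in E; change (bm_tb S1) with (io Ib [1]) in E;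
  change (bm_tb S2) with (io Ib [2]) in E.
  tolay E.
  ctx E U V r.
Qed.

Definition LR12 := LR 1 2 l01 l02.
Definition LR21 := LR 2 1 l02 l01.
Definition R012 := R 1 2 l01 l02.
Definition R021 := R 2 1 l02 l01.
Definition LL01 := LL 0 1 l02 l12.
Definition LL10 := LL 1 0 l12 l02.
Definition L012 := Lm 0 1 l02 l12.
Definition L102 := Lm 1 0 l12 l02.
Definition lb01 := E 0 [1] l01.
Definition lb02 := E 0 [2] l02.
Definition lb12 := E 1 [2] l12.

Lemma TLR12 : ty LR12 [1;2;0] [0;1;2]. Proof. apply (ty_LR _ _ _ _ W01 W02). Qed.
Lemma TLR21 : ty LR21 [2;1;0] [0;2;1]. Proof. apply (ty_LR _ _ _ _ W02 W01). Qed.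
Lemma TLL01 : ty LL01 [2;0;1] [0;1;2]. Proof. apply (ty_LL _ _ _ _ W02 W12). Qed.
Lemma TLL10 : ty LL10 [2;1;0] [1;0;2]. Proof. apply (ty_LL _ _ _ _ W12 W02). Qed.
Lemma TR012 : ty R012 [0;1;2] [0;1;2]. Proof. apply (ty_R _ _ _ _ W01 W02). Qed.
Lemma TR021 : ty R021 [0;2;1] [0;2;1]. Proof. apply (ty_R _ _ _ _ W02 W01). Qed.
Lemma TL012 : ty L012 [0;1;2] [0;1;2]. Proof. apply (ty_Lm _ _ _ _ W02 W12). Qed.
Lemma TL102 : ty L102 [1;0;2] [1;0;2]. Proof. apply (ty_Lm _ _ _ _ W12 W02). Qed.
Lemma Tb01 : ty lb01 [0;1] [0;1]. Proof. apply ty_E, T01. Qed.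
Lemma Tb02 : ty lb02 [0;2] [0;2]. Proof. apply ty_E, T02. Qed.
Lemma Tb12 : ty lb12 [1;2] [1;2]. Proof. apply ty_E, T12. Qed.
Lemma Tb02' : ty (E' 2 [0] l02) [0;2] [0;2]. Proof. apply ty_E', T02. Qed.
Lemma Tb12' : ty (E' 2 [1] l12) [1;2] [1;2]. Proof. apply ty_E', T12. Qed.

Ltac prepM := pose proof T01; pose proof T02; pose proof T12; pose proof TLR12; pose proof TLR21;
  pose proof TLL01; pose proof TLL10; pose proof TR012; pose proof TR021; pose proof TL012;
  pose proof TL102; pose proof Tb01; pose proof Tb02; pose proof Tb12; pose proof Tb02'; pose proof Tb12'.

Lemma R2 U V U1 V1 r p q : ty r p q -> U1 = U ++ [0] -> V1 = V -> q = U ++ 0 :: 2 :: 1 :: V ->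
  vcomp (lay U R012 V) (vcomp (lay U1 l12 V1) r) = vcomp (lay U1 l12 V1) (vcomp (lay U R021 V) r).
Proof.
  prepM. intros; subst. unfold R012, R021, R.
  rw (Edef 0 [1;2] LR12 TLR12 U V).
  rw (LRdef 1 2 l01 l02 W01 W02).
  rw (slideB _ _ l12 (eta 0) []).
  rw YB.
  rw (slideA _ _ (mu 0) l12 []).
  rwb (LRdef 2 1 l02 l01 W02 W01).
  rwb (Edef 0 [2;1] LR21 TLR21 U V).
  reflexivity.
Qed.

Lemma L5 U V V1 r p q : ty r p q -> V1 = 2 :: V -> q = U ++ 1 :: 0 :: 2 :: V ->
  vcomp (lay U L012 V) (vcomp (lay U l01 V1) r) = vcomp (lay U l01 V1) (vcomp (lay U L102 V) r).
Proof.
  prepM. intros; subst. unfold L012, L102, Lm.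
  rw (Edef' 2 [0;1] LL01 TLL01 U V).
  rw (LLdef 0 1 l02 l12 W02 W12).
  rw (slideA _ _ (eta 2) l01 []).
  rwb YB.
  rw (slideB _ _ l01 (mu 2) []).
  rwb (LLdef 1 0 l12 l02 W12 W02).
  rwb (Edef' 2 [1;0] LL10 TLL10 U V).
  reflexivity.
Qed.

Lemma S7a U V r p q : ty r p q -> q = U ++ 0 :: 1 :: 2 :: V ->
  vcomp (lay U L012 V) (vcomp (lay U R012 V) r) = vcomp (lay U L012 V) (vcomp (lay U lb01 (2 :: V)) r).
Proof.
  prepM. intros; subst. unfold R012, R.
  rw (Edef 0 [1;2] LR12 TLR12 U V).
  unfold L012.
  rw (Llin 0 1 l02 l12 W02 W12).
  rw (LRdef 1 2 l01 l02 W01 W02).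
  rwb (G4 0 [2] l02 T02 (U ++ [0;1]) V).
  rw (e12 0 2 l02 W02 (U ++ [0;1]) V).
  rw L5.
  rw (L4a 1 0 l12 l02 W12 W02).
  rwb L5.
  rwb (Llin 0 1 l02 l12 W02 W12 U V).
  rwb (Edef 0 [1] l01 T01 U (2 :: V)).
  reflexivity.
Qed.

Lemma S7c U V r p q : ty r p q -> q = U ++ 0 :: 1 :: 2 :: V ->
  vcomp (lay U R012 V) (vcomp (lay (U ++ [0]) lb12 V) r) = vcomp (lay U R012 V) (vcomp (lay U L012 V) r).
Proof.
  prepM. intros; subst. unfold L012, Lm.
  rw (Edef' 2 [0;1] LL01 TLL01 U V).
  unfold R012.
  rw (Rlin 1 2 l01 l02 W01 W02).
  rw (LLdef 0 1 l02 l12 W02 W12).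
  rwb (G4' 2 [0] l02 T02 U (1 :: 2 :: V)).
  rwb (e12 0 2 l02 W02 U (1 :: 2 :: V)).
  rw R2.
  rw (R1a 2 1 l02 l01 W02 W01).
  rwb R2.
  rwb (Rlin 1 2 l01 l02 W01 W02 U V).
  rwb (Edef' 2 [1] l12 T12 (U ++ [0]) V).
  rwb (e12 1 2 l12 W12 (U ++ [0]) V).
  reflexivity.
Qed.

Lemma S7b U V r p q : ty r p q -> q = U ++ 0 :: 1 :: 2 :: V ->
  vcomp (lay U L012 V) (vcomp (lay U lb01 (2 :: V)) r) = vcomp (lay U R012 V) (vcomp (lay (U ++ [0]) lb12 V) r).
Proof.
  prepM. intros; subst. unfold lb01, lb12.
  rw (Edef 0 [1] l01 T01 U (2 :: V)).
  unfold L012.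
  rw (Llin 0 1 l02 l12 W02 W12).
  rw L5.
  unfold L102, Lm.
  rw (Edef' 2 [1;0] LL10 TLL10 (U ++ [0]) V).
  rw (LLdef 1 0 l12 l02 W12 W02).
  rw (e12 1 2 l12 W12 (U ++ [0]) V).
  rw (Edef' 2 [1] l12 T12 (U ++ [0]) V).
  unfold R012.
  rw (Rlin 1 2 l01 l02 W01 W02).
  rw R2.
  unfold R021, R.
  rw (Edef 0 [2;1] LR21 TLR21 U (2 :: V)).
  rw (LRdef 2 1 l02 l01 W02 W01).
  rw (slideB _ _ (eta 2) (eta 0) [1]).
  rw (slideA _ _ l01 (mu 2) []).
  rw (slideA _ _ (mu 0) (mu 2) [1]).
  rw YB.
  rw (slideA _ _ (mu 0) l12 []).
  reflexivity.
Qed.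

Lemma e02c : lb02 = E' 2 [0] l02.
Proof.
  prepM. apply eq_tail_b with [0;2] [0;2]; [tyi | tyi |].
  unfold lb02. rewrite (lay0 Ib (E 0 [2] l02) [0;2] [0;2]) by tyi.
  rewrite (lay0 Ib (E' 2 [0] l02) [0;2] [0;2]) by tyi.
  rw (e12 0 2 l02 W02 [] []). reflexivity.
Qed.
Lemma e12c : lb12 = E' 2 [1] l12.
Proof.
  prepM. apply eq_tail_b with [1;2] [1;2]; [tyi | tyi |].
  unfold lb12. rewrite (lay0 Ib (E 1 [2] l12) [1;2] [1;2]) by tyi.
  rewrite (lay0 Ib (E' 2 [1] l12) [1;2] [1;2]) by tyi.
  rw (e12 1 2 l12 W12 [] []). reflexivity.
Qed.

Lemma C_idR012 : vcomp R012 R012 = R012.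
Proof.
  prepM. apply eq_tail_b with [0;1;2] [0;1;2]; [tyi | tyi |].
  rewrite (lay0 Ib R012 _ _ TR012). vnorm. unfold R012, R.
  rw (G3 0 [1;2] LR12 TLR12 (LRmult 1 2 l01 l02 W01 W02)). reflexivity.
Qed.
Lemma C_idR021 : vcomp R021 R021 = R021.
Proof.
  prepM. apply eq_tail_b with [0;2;1] [0;2;1]; [tyi | tyi |].
  rewrite (lay0 Ib R021 _ _ TR021). vnorm. unfold R021, R.
  rw (G3 0 [2;1] LR21 TLR21 (LRmult 2 1 l02 l01 W02 W01)). reflexivity.
Qed.
Lemma C_idL012 : vcomp L012 L012 = L012.
Proof.
  prepM. apply eq_tail_b with [0;1;2] [0;1;2]; [tyi | tyi |].
  rewrite (lay0 Ib L012 _ _ TL012). vnorm. unfold L012, Lm.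
  rw (G3' 2 [0;1] LL01 TLL01 (LLmult 0 1 l02 l12 W02 W12)). reflexivity.
Qed.
Lemma C_idL102 : vcomp L102 L102 = L102.
Proof.
  prepM. apply eq_tail_b with [1;0;2] [1;0;2]; [tyi | tyi |].
  rewrite (lay0 Ib L102 _ _ TL102). vnorm. unfold L102, Lm.
  rw (G3' 2 [1;0] LL10 TLL10 (LLmult 1 0 l12 l02 W12 W02)). reflexivity.
Qed.

Ltac rwc t := let H := fresh in pose proof t as H; cbn [app] in H; rewrite H; clear H.
Ltac tb_ u v := apply eq_tail_b with u v; [tyi | tyi |].

Lemma C1a : vcomp R012 (hcomp lb01 (io Ik [2])) = R012.
Proof.
  prepM. rewrite (ins_r R012 (hcomp lb01 (io Ik [2])) [0;1;2] [0;1;2] [0;1;2]) by tyi.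
  rwc (convAr lb01 [0;1] [0;1] 2 Tb01).
  tb_ [0;1;2] [0;1;2]. rewrite (lay0 Ib R012 _ _ TR012). vnorm.
  unfold R012. rw (R1a 1 2 l01 l02 W01 W02). reflexivity.
Qed.
Lemma C1b : R012 = vcomp (hcomp lb01 (io Ik [2])) R012.
Proof.
  prepM. rewrite (ins_l R012 (hcomp lb01 (io Ik [2])) [0;1;2] [0;1;2] [0;1;2]) by tyi.
  rwc (convBr lb01 [0;1] [0;1] 2 Tb01).
  tb_ [0;1;2] [0;1;2]. rewrite (lay0 Ib R012 _ _ TR012). vnorm.
  unfold R012. rw (R1b 1 2 l01 l02 W01 W02). reflexivity.
Qed.
Lemma C1c : vcomp R021 (hcomp lb02 (io Ik [1])) = R021.
Proof.
  prepM. rewrite (ins_r R021 (hcomp lb02 (io Ik [1])) [0;2;1] [0;2;1] [0;2;1]) by tyi.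
  rwc (convAr lb02 [0;2] [0;2] 1 Tb02).
  tb_ [0;2;1] [0;2;1]. rewrite (lay0 Ib R021 _ _ TR021). vnorm.
  unfold R021. rw (R1a 2 1 l02 l01 W02 W01). reflexivity.
Qed.
Lemma C1d : R021 = vcomp (hcomp lb02 (io Ik [1])) R021.
Proof.
  prepM. rewrite (ins_l R021 (hcomp lb02 (io Ik [1])) [0;2;1] [0;2;1] [0;2;1]) by tyi.
  rwc (convBr lb02 [0;2] [0;2] 1 Tb02).
  tb_ [0;2;1] [0;2;1]. rewrite (lay0 Ib R021 _ _ TR021). vnorm.
  unfold R021. rw (R1b 2 1 l02 l01 W02 W01). reflexivity.
Qed.

Lemma C2 : vcomp R012 (hcomp (io Ik [0]) l12) = vcomp (hcomp (io Ik [0]) l12) R021.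
Proof.
  prepM. rewrite (ins_r R012 (hcomp (io Ik [0]) l12) [0;1;2] [0;1;2] [0;2;1]) by tyi.
  rwc (convAl l12 [2;1] [1;2] 0 T12).
  rewrite (ins_l R021 (hcomp (io Ik [0]) l12) [0;2;1] [0;2;1] [0;1;2]) by tyi.
  rwc (convBl l12 [2;1] [1;2] 0 T12).
  tb_ [0;2;1] [0;1;2]. rewrite (lay0 Ib R012 _ _ TR012), (lay0 Ib R021 _ _ TR021). vnorm.
  rw R2. reflexivity.
Qed.

Lemma C3a : vcomp R012 (hcomp l01 (io Ik [2])) = vcomp (hcomp l01 (io Ik [2])) (hcomp (io Ik [1]) lb02).
Proof.
  prepM. rewrite (ins_r R012 (hcomp l01 (io Ik [2])) [0;1;2] [0;1;2] [1;0;2]) by tyi.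
  rwc (convAr l01 [1;0] [0;1] 2 T01).
  rwc (convC1 l01 lb02 1 [0] 2 [0;1] [0;2] T01 Tb02).
  tb_ [1;0;2] [0;1;2]. rewrite (lay0 Ib R012 _ _ TR012). vnorm.
  unfold R012. rw (R3 1 2 l01 l02 W01 W02). reflexivity.
Qed.
Lemma C3b : vcomp R021 (hcomp l02 (io Ik [1])) = vcomp (hcomp l02 (io Ik [1])) (hcomp (io Ik [2]) lb01).
Proof.
  prepM. rewrite (ins_r R021 (hcomp l02 (io Ik [1])) [0;2;1] [0;2;1] [2;0;1]) by tyi.
  rwc (convAr l02 [2;0] [0;2] 1 T02).
  rwc (convC1 l02 lb01 2 [0] 1 [0;2] [0;1] T02 Tb01).
  tb_ [2;0;1] [0;2;1]. rewrite (lay0 Ib R021 _ _ TR021). vnorm.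
  unfold R021. rw (R3 2 1 l02 l01 W02 W01). reflexivity.
Qed.

Lemma C4a : vcomp L012 (hcomp (io Ik [0]) lb12) = L012.
Proof.
  prepM. rewrite (ins_r L012 (hcomp (io Ik [0]) lb12) [0;1;2] [0;1;2] [0;1;2]) by tyi.
  rwc (convAl lb12 [1;2] [1;2] 0 Tb12). rewrite e12c.
  tb_ [0;1;2] [0;1;2]. rewrite (lay0 Ib L012 _ _ TL012). vnorm.
  unfold L012. rw (L4a 0 1 l02 l12 W02 W12). reflexivity.
Qed.
Lemma C4b : L012 = vcomp (hcomp (io Ik [0]) lb12) L012.
Proof.
  prepM. rewrite (ins_l L012 (hcomp (io Ik [0]) lb12) [0;1;2] [0;1;2] [0;1;2]) by tyi.
  rwc (convBl lb12 [1;2] [1;2] 0 Tb12). rewrite e12c.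
  tb_ [0;1;2] [0;1;2]. rewrite (lay0 Ib L012 _ _ TL012). vnorm.
  unfold L012. rw (L4b 0 1 l02 l12 W02 W12). reflexivity.
Qed.
Lemma C4c : vcomp L102 (hcomp (io Ik [1]) lb02) = L102.
Proof.
  prepM. rewrite (ins_r L102 (hcomp (io Ik [1]) lb02) [1;0;2] [1;0;2] [1;0;2]) by tyi.
  rwc (convAl lb02 [0;2] [0;2] 1 Tb02). rewrite e02c.
  tb_ [1;0;2] [1;0;2]. rewrite (lay0 Ib L102 _ _ TL102). vnorm.
  unfold L102. rw (L4a 1 0 l12 l02 W12 W02). reflexivity.
Qed.
Lemma C4d : L102 = vcomp (hcomp (io Ik [1]) lb02) L102.
Proof.
  prepM. rewrite (ins_l L102 (hcomp (io Ik [1]) lb02) [1;0;2] [1;0;2] [1;0;2]) by tyi.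
  rwc (convBl lb02 [0;2] [0;2] 1 Tb02). rewrite e02c.
  tb_ [1;0;2] [1;0;2]. rewrite (lay0 Ib L102 _ _ TL102). vnorm.
  unfold L102. rw (L4b 1 0 l12 l02 W12 W02). reflexivity.
Qed.

Lemma C5 : vcomp L012 (hcomp l01 (io Ik [2])) = vcomp (hcomp l01 (io Ik [2])) L102.
Proof.
  prepM. rewrite (ins_r L012 (hcomp l01 (io Ik [2])) [0;1;2] [0;1;2] [1;0;2]) by tyi.
  rwc (convAr l01 [1;0] [0;1] 2 T01).
  rewrite (ins_l L102 (hcomp l01 (io Ik [2])) [1;0;2] [1;0;2] [0;1;2]) by tyi.
  rwc (convBr l01 [1;0] [0;1] 2 T01).
  tb_ [1;0;2] [0;1;2]. rewrite (lay0 Ib L012 _ _ TL012), (lay0 Ib L102 _ _ TL102). vnorm.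
  rw L5. reflexivity.
Qed.

Lemma C6a : vcomp L012 (hcomp (io Ik [0]) l12) = vcomp (hcomp (io Ik [0]) l12) (hcomp lb02 (io Ik [1])).
Proof.
  prepM. rewrite (ins_r L012 (hcomp (io Ik [0]) l12) [0;1;2] [0;1;2] [0;2;1]) by tyi.
  rwc (convAl l12 [2;1] [1;2] 0 T12).
  rwc (convC2 l12 lb02 0 [2] 1 [1;2] [0;2] T12 Tb02). rewrite e02c.
  tb_ [0;2;1] [0;1;2]. rewrite (lay0 Ib L012 _ _ TL012). vnorm.
  unfold L012. rw (L6 0 1 l02 l12 W02 W12). reflexivity.
Qed.
Lemma C6b : vcomp L102 (hcomp (io Ik [1]) l02) = vcomp (hcomp (io Ik [1]) l02) (hcomp lb12 (io Ik [0])).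
Proof.
  prepM. rewrite (ins_r L102 (hcomp (io Ik [1]) l02) [1;0;2] [1;0;2] [1;2;0]) by tyi.
  rwc (convAl l02 [2;0] [0;2] 1 T02).
  rwc (convC2 l02 lb12 1 [2] 0 [0;2] [1;2] T02 Tb12). rewrite e12c.
  tb_ [1;2;0] [1;0;2]. rewrite (lay0 Ib L102 _ _ TL102). vnorm.
  unfold L102. rw (L6 1 0 l12 l02 W12 W02). reflexivity.
Qed.

Lemma C7a : vcomp L012 R012 = vcomp L012 (hcomp lb01 (io Ik [2])).
Proof.
  prepM. rewrite (ins_r L012 (hcomp lb01 (io Ik [2])) [0;1;2] [0;1;2] [0;1;2]) by tyi.
  rwc (convAr lb01 [0;1] [0;1] 2 Tb01).
  tb_ [0;1;2] [0;1;2]. rewrite (lay0 Ib L012 _ _ TL012), (lay0 Ib R012 _ _ TR012). vnorm.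
  rw S7a. reflexivity.
Qed.
Lemma C7b : vcomp L012 (hcomp lb01 (io Ik [2])) = vcomp R012 (hcomp (io Ik [0]) lb12).
Proof.
  prepM. rewrite (ins_r L012 (hcomp lb01 (io Ik [2])) [0;1;2] [0;1;2] [0;1;2]) by tyi.
  rwc (convAr lb01 [0;1] [0;1] 2 Tb01).
  rewrite (ins_r R012 (hcomp (io Ik [0]) lb12) [0;1;2] [0;1;2] [0;1;2]) by tyi.
  rwc (convAl lb12 [1;2] [1;2] 0 Tb12).
  tb_ [0;1;2] [0;1;2]. rewrite (lay0 Ib L012 _ _ TL012), (lay0 Ib R012 _ _ TR012). vnorm.
  rw S7b. reflexivity.
Qed.
Lemma C7c : vcomp R012 (hcomp (io Ik [0]) lb12) = vcomp R012 L012.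
Proof.
  prepM. rewrite (ins_r R012 (hcomp (io Ik [0]) lb12) [0;1;2] [0;1;2] [0;1;2]) by tyi.
  rwc (convAl lb12 [1;2] [1;2] 0 Tb12).
  tb_ [0;1;2] [0;1;2]. rewrite (lay0 Ib L012 _ _ TL012), (lay0 Ib R012 _ _ TR012). vnorm.
  rw S7c. reflexivity.
Qed.

Lemma lb01E : lam_bar S1 S0 l01 = lb01.
Proof. prepM. unfold lam_bar, lb01, E. erewrite (lay_l0 Ib (mu 0)), (lay_r0 Ib l01), (lay_r0 Ib (eta 0)) by tyi. reflexivity. Qed.
Lemma lb02E : lam_bar S2 S0 l02 = lb02.
Proof. prepM. unfold lam_bar, lb02, E. erewrite (lay_l0 Ib (mu 0)), (lay_r0 Ib l02), (lay_r0 Ib (eta 0)) by tyi. reflexivity. Qed.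
Lemma lb12E : lam_bar S2 S1 l12 = lb12.
Proof. prepM. unfold lam_bar, lb12, E. erewrite (lay_l0 Ib (mu 1)), (lay_r0 Ib l12), (lay_r0 Ib (eta 1)) by tyi. reflexivity. Qed.
Lemma R012E : lam_right S0 S1 S2 l01 l02 = R012.
Proof. exact (Rconv 1 2 l01 l02 W01 W02). Qed.
Lemma R021E : lam_right S0 S2 S1 l02 l01 = R021.
Proof. exact (Rconv 2 1 l02 l01 W02 W01). Qed.
Lemma L012E : lam_left S0 S1 S2 l02 l12 = L012.
Proof. exact (Lconv 0 1 l02 l12 W02 W12). Qed.
Lemma L102E : lam_left S1 S0 S2 l12 l02 = L102.
Proof. exact (Lconv 1 0 l12 l02 W12 W02). Qed.

Lemma main_all :
  let s0 := bm_t S0 in let s1 := bm_t S1 in let s2 := bm_t S2 in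
  let lb01 := lam_bar S1 S0 l01 in
  let lb02 := lam_bar S2 S0 l02 in
  let lb12 := lam_bar S2 S1 l12 in
  let R012 := lam_right S0 S1 S2 l01 l02 in
  let R021 := lam_right S0 S2 S1 l02 l01 in
  let L012 := lam_left S0 S1 S2 l02 l12 in
  let L102 := lam_left S1 S0 S2 l12 l02 in
  idem2 (comp1 s0 (comp1 s1 s2)) R012 /\
  idem2 (comp1 s0 (comp1 s2 s1)) R021 /\
  idem2 (comp1 s0 (comp1 s1 s2)) L012 /\
  idem2 (comp1 s1 (comp1 s0 s2)) L102 /\
  (vcomp R012 (wr lb01 s2) = R012 /\ R012 = vcomp (wr lb01 s2) R012) /\
  (vcomp R021 (wr lb02 s1) = R021 /\ R021 = vcomp (wr lb02 s1) R021) /\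
  vcomp R012 (wl s0 l12) = vcomp (wl s0 l12) R021 /\
  vcomp R012 (wr l01 s2) = vcomp (wr l01 s2) (wl s1 lb02) /\
  vcomp R021 (wr l02 s1) = vcomp (wr l02 s1) (wl s2 lb01) /\
  (vcomp L012 (wl s0 lb12) = L012 /\ L012 = vcomp (wl s0 lb12) L012) /\
  (vcomp L102 (wl s1 lb02) = L102 /\ L102 = vcomp (wl s1 lb02) L102) /\
  vcomp L012 (wr l01 s2) = vcomp (wr l01 s2) L102 /\
  vcomp L012 (wl s0 l12) = vcomp (wl s0 l12) (wr lb02 s1) /\
  vcomp L102 (wl s1 l02) = vcomp (wl s1 l02) (wr lb12 s0) /\
  (vcomp L012 R012 = vcomp L012 (wr lb01 s2) /\
   vcomp L012 (wr lb01 s2) = vcomp R012 (wl s0 lb12) /\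
   vcomp R012 (wl s0 lb12) = vcomp R012 L012).
Proof.
  cbv zeta.
  rewrite lb01E, lb02E, lb12E, R012E, R021E, L012E, L102E. unfold wl, wr.
  change (id2 (bm_t S0)) with (io Ik [0]). change (id2 (bm_t S1)) with (io Ik [1]).
  change (id2 (bm_t S2)) with (io Ik [2]).
  unfold idem2.
  repeat split.
  all: first [ exact C_idR012 | exact C_idR021 | exact C_idL012 | exact C_idL102
    | exact C1a | exact C1b | exact C1c | exact C1d | exact C2 | exact C3a | exact C3b
    | exact C4a | exact C4b | exact C4c | exact C4d | exact C5 | exact C6a | exact C6b
    | exact C7a | exact C7b | exact C7c
    | exact (ty_src Ib _ _ _ TR012) | exact (ty_tgt Ib _ _ _ TR012)
    | exact (ty_src Ib _ _ _ TR021) | exact (ty_tgt Ib _ _ _ TR021)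
    | exact (ty_src Ib _ _ _ TL012) | exact (ty_tgt Ib _ _ _ TL012)
    | exact (ty_src Ib _ _ _ TL102) | exact (ty_tgt Ib _ _ _ TL102) ].
Qed.

End Main.
End Infra.

Theorem lemma2p2 (K : TwoCat) (A : ob K) (S0 S1 S2 : bar_monad K A)
  (l01 l02 l12 : c2 K) :
  wdl2_cell S0 S1 S2 l01 l02 l12 ->
  let s0 := bm_t S0 in let s1 := bm_t S1 in let s2 := bm_t S2 in
  let lb01 := lam_bar S1 S0 l01 in
  let lb02 := lam_bar S2 S0 l02 in
  let lb12 := lam_bar S2 S1 l12 in
  let R012 := lam_right S0 S1 S2 l01 l02 in
  let R021 := lam_right S0 S2 S1 l02 l01 in
  let L012 := lam_left S0 S1 S2 l02 l12 in
  let L102 := lam_left S1 S0 S2 l12 l02 in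
  idem2 (comp1 s0 (comp1 s1 s2)) R012 /\
  idem2 (comp1 s0 (comp1 s2 s1)) R021 /\
  idem2 (comp1 s0 (comp1 s1 s2)) L012 /\
  idem2 (comp1 s1 (comp1 s0 s2)) L102 /\
  (vcomp R012 (wr lb01 s2) = R012 /\ R012 = vcomp (wr lb01 s2) R012) /\
  (vcomp R021 (wr lb02 s1) = R021 /\ R021 = vcomp (wr lb02 s1) R021) /\
  vcomp R012 (wl s0 l12) = vcomp (wl s0 l12) R021 /\
  vcomp R012 (wr l01 s2) = vcomp (wr l01 s2) (wl s1 lb02) /\
  vcomp R021 (wr l02 s1) = vcomp (wr l02 s1) (wl s2 lb01) /\
  (vcomp L012 (wl s0 lb12) = L012 /\ L012 = vcomp (wl s0 lb12) L012) /\
  (vcomp L102 (wl s1 lb02) = L102 /\ L102 = vcomp (wl s1 lb02) L102) /\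
  vcomp L012 (wr l01 s2) = vcomp (wr l01 s2) L102 /\
  vcomp L012 (wl s0 l12) = vcomp (wl s0 l12) (wr lb02 s1) /\
  vcomp L102 (wl s1 l02) = vcomp (wl s1 l02) (wr lb12 s0) /\
  (vcomp L012 R012 = vcomp L012 (wr lb01 s2) /\
   vcomp L012 (wr lb01 s2) = vcomp R012 (wl s0 lb12) /\
   vcomp R012 (wl s0 lb12) = vcomp R012 L012).
Proof.
  intros H. exact (main_all K A S0 S1 S2 l01 l02 l12 H).
Qed.
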